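(* The forcing $\tilde{\mathbb E}$, with the functions $\operatorname{stem}$ and $\operatorname{loss}$ (defined on $Q'=\operatorname{dom}(\operatorname{loss})$), has strong FAM-limits for intervals: for every FAM $\Xi$ there is a function $\lim_\Xi:\tilde{\mathbb E}^\omega\to\tilde{\mathbb E}$ which is a strong FAM limit for intervals.
   Context: Fix an interval partition $(I_k)_{k\in\omega}$ of $\omega$ into finite intervals with $|I_k|\to\infty$. A partial FAM is a finitely additive probability measure on a Boolean subalgebra of $\mathcal P(\omega)$ containing all singletons and assigning them measure $0$; a FAM is a partial FAM with domain $\mathcal P(\omega)$. $T^*$, $\Omega_s$, $\mu_s$: defined by induction on height $h\ge0$: $T^*\cap\omega^0=\{\langle\rangle\}$; $\rho(h)=\max(|T^*\cap\omega^h|,h+2)$, $\pi(h)=((h+1)^2\rho(h)^{h+1})^{\rho(h)^h}$, $a(h)=\pi(h)^{h+2}$, $M(h)=a(h)^2$; each $s\in T^*\cap\omega^h$ has successor set $\Omega_s=\{s^\frown\ell:\ell<M(h)\}$; $\mu_s(A)=\log_{a(h)}\big(\frac{M(h)}{M(h)-|A|}\big)$ for $A\subsetneq\Omega_s$ and $\mu_s(\Omega_s)=\infty$. For a subtree $p\subseteq T^*$ and $s\in p$, $\mu_s(p)=\mu_s(p\cap\Omega_s)$; the stem of $p$ is its shortest splitting node. $\tilde{\mathbb E}$ consists of subtrees $p\subseteq T^*$ with stem of height $h^*$ such that $\mu_t(p)\ge1+\frac1{h^*}$ for all $t\in p$ extending the stem, ordered by inclusion. $\operatorname{stem}(p)$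 is the stem; $\operatorname{loss}(p)$ is defined iff there is an integer $m\ge2$ with stem height $h^*>3m$ and $\mu_s(p)\ge1+\frac1m$ for all $s\in p$ of height $\ge h^*$, and then $\operatorname{loss}(p)=\frac1m$ for the maximal such $m$. For a pair $(s^*,l^* )$, an $(s^*,l^* )$-sequence is a sequence $(q_\ell)_{\ell\in\omega}$ of conditions with $\operatorname{stem}(q_\ell)=s^*$ and $\operatorname{loss}(q_\ell)=l^*$ for all $\ell$. Given a FAM $\Xi$, a function $\lim_\Xi$ from sequences of conditions to conditions is a strong FAM limit for intervals if: for every pair $(s^*,l^* )$, every $j^*\in\omega$ and $(s^*,l^* )$-sequences $\bar q^j$ ($j<j^*$), every $\epsilon>0$, $k^*\in\omega$, every finite partition $(B_m)_{m<m^*}$ of $\omega$, and every condition $q$ stronger than all $\lim_\Xi(\bar q^j)$ ($j<j^*$), there are a nonempty finite $u\subseteq\omega\setminus k^*$ and a condition $q'\le q$ such that $\Xi(B_m)-\epsilon<\frac{|u\cap B_m|}{|u|}<\Xi(B_m)+\epsilon$ for all $m<m^*$, and $\frac1{|u|}\sum_{k\in u}\frac{|\{\ell\in I_k:\ q'\le q^j_\ell\}|}{|I_k|}\ge1-l^*-\epsilon$ for all $j<j^*$. *)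

(* Defs.v *)
From Stdlib Require Import Reals Lra Lia Arith List ClassicalEpsilon.
Import ListNotations.
Open Scope R_scope.

(* Given c = |T* ∩ ω^h| and h, compute rho(h), pi(h), a(h), M(h). *)
Definition rho_of (c h : nat) : nat := Nat.max c (h + 2).
Definition pi_of (c h : nat) : nat :=
  Nat.pow ((h + 1) * (h + 1) * Nat.pow (rho_of c h) (h + 1))
          (Nat.pow (rho_of c h) h).
Definition a_of (c h : nat) : nat := Nat.pow (pi_of c h) (h + 2).
Definition M_of (c h : nat) : nat := a_of c h * a_of c h.

(* levcard h = |T* ∩ ω^h|: level 0 is {<>}, and every node of height h has
   exactly M(h) successors. *)
Fixpoint levcard (h : nat) : nat :=
  match h with
  | O => 1
  | S h' => levcard h' * M_of (levcard h') h'
  end.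

Definition rho (h : nat) : nat := rho_of (levcard h) h.
Definition piT (h : nat) : nat := pi_of (levcard h) h.
Definition aT (h : nat) : nat := a_of (levcard h) h.
Definition MT (h : nat) : nat := M_of (levcard h) h.

Definition Tstar (s : list nat) : Prop :=
  forall i, (i < length s)%nat -> (nth i s 0 < MT i)%nat.

Definition pdec (P : Prop) : bool :=
  if excluded_middle_informative P then true else false.

Definition countP (P : nat -> Prop) (lo n : nat) : nat :=
  length (filter (fun i => pdec (P i)) (seq lo n)).

(* extended value: None = +infinity *)
Definition mu (h n : nat) : option R :=
  if Nat.ltb n (MT h)
  then Some (ln (INR (MT h) / INR (MT h - n)) / ln (INR (aT h)))
  else None.

Definition ege (x : option R) (c : R) : Prop :=
  match x with None => True | Some r => c <= r end.

Definition Tree := list nat -> Prop.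

Definition subtree (p : Tree) : Prop :=
  p [] /\ (forall s, p s -> Tstar s) /\
  (forall s t, p (s ++ t) -> p s).

Definition nsucc (p : Tree) (s : list nat) : nat :=
  countP (fun l => p (s ++ [l])) 0 (MT (length s)).

Definition mu_node (p : Tree) (s : list nat) : option R :=
  mu (length s) (nsucc p s).

Definition splitting (p : Tree) (s : list nat) : Prop :=
  exists a b, a <> b /\ p (s ++ [a]) /\ p (s ++ [b]).

Definition is_stem (p : Tree) (s : list nat) : Prop :=
  p s /\ splitting p s /\
  (forall t, p t -> splitting p t -> (length s <= length t)%nat).

Definition prefix (s t : list nat) : Prop := exists r, t = s ++ r.

(* membership in E~ (stem height h* >= 1 so that 1/h* makes sense) *)
Definition inE (p : Tree) : Prop :=
  subtree p /\
  exists st, is_stem p st /\ (1 <= length st)%nat /\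
    forall t, p t -> prefix st t ->
      ege (mu_node p t) (1 + 1 / INR (length st)).

Definition Econd : Type := { p : Tree | inE p }.

Definition Ele (q p : Econd) : Prop :=
  forall s, proj1_sig q s -> proj1_sig p s.

Definition stem_is (q : Econd) (s : list nat) : Prop := is_stem (proj1_sig q) s.

Definition loss_ok (p : Tree) (hstar m : nat) : Prop :=
  (2 <= m)%nat /\ (3 * m < hstar)%nat /\
  forall s, p s -> (hstar <= length s)%nat ->
    ege (mu_node p s) (1 + 1 / INR m).

Definition loss_is (q : Econd) (l : R) : Prop :=
  exists st, stem_is q st /\
  exists m, loss_ok (proj1_sig q) (length st) m /\
    (forall m', loss_ok (proj1_sig q) (length st) m' -> (m' <= m)%nat) /\
    l = 1 / INR m.

(* I_k = [start k, start (k+1)) *)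
Definition interval_partition (start : nat -> nat) : Prop :=
  start 0%nat = 0%nat /\
  (forall k, (start k < start (S k))%nat) /\
  (forall N, exists K, forall k, (K <= k)%nat -> (N <= start (S k) - start k)%nat).

Definition Ilen (start : nat -> nat) (k : nat) : nat := (start (S k) - start k)%nat.

(* subsets of ω are boolean predicates *)
Definition FAM (Xi : (nat -> bool) -> R) : Prop :=
  (forall A, 0 <= Xi A) /\
  Xi (fun _ => true) = 1 /\
  (forall A B, (forall n, andb (A n) (B n) = false) ->
     Xi (fun n => orb (A n) (B n)) = Xi A + Xi B) /\
  (forall k, Xi (fun n => Nat.eqb n k) = 0).

Definition finite_partition (B : nat -> nat -> bool) (mstar : nat) : Prop :=
  (forall n, exists m, (m < mstar)%nat /\ B m n = true) /\
  (forall m1 m2 n, (m1 < mstar)%nat -> (m2 < mstar)%nat ->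
     B m1 n = true -> B m2 n = true -> m1 = m2).

Fixpoint sumR (l : list R) : R :=
  match l with [] => 0 | x :: l' => x + sumR l' end.

Definition strong_FAM_limit (start : nat -> nat) (Xi : (nat -> bool) -> R)
  (lim : (nat -> Econd) -> Econd) : Prop :=
  forall (sstar : list nat) (lstar : R) (jstar : nat)
         (qs : nat -> nat -> Econd),
    (forall j l, (j < jstar)%nat -> stem_is (qs j l) sstar /\ loss_is (qs j l) lstar) ->
  forall (eps : R) (kstar : nat) (B : nat -> nat -> bool) (mstar : nat),
    0 < eps -> finite_partition B mstar ->
  forall q : Econd, (forall j, (j < jstar)%nat -> Ele q (lim (qs j))) ->
  exists (u : list nat) (q' : Econd),
    u <> [] /\ NoDup u /\ (forall k, In k u -> (kstar <= k)%nat) /\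
    Ele q' q /\
    (forall m, (m < mstar)%nat ->
       Xi (B m) - eps < INR (length (filter (B m) u)) / INR (length u) /\
       INR (length (filter (B m) u)) / INR (length u) < Xi (B m) + eps) /\
    (forall j, (j < jstar)%nat ->
       1 / INR (length u) *
       sumR (map (fun k => INR (countP (fun l => Ele q' (qs j l)) (start k) (Ilen start k))
                           / INR (Ilen start k)) u)
       >= 1 - lstar - eps).

(* Main.v *)
Require Import Defs.
From Stdlib Require Import Reals Lra Lia List Arith ZArith Bool Classical ClassicalEpsilon FunctionalExtensionality.
Import ListNotations.
Open Scope bool_scope.
Open Scope R_scope.

Lemma piT_ge (h : nat) : (1 <= h)%nat -> (4 * (h+1) * (h+1) <= piT h)%nat.
Proof.
  intro Hh. unfold piT, pi_of.
  set (r := rho_of (levcard h) h).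
  assert (Hr : (2 <= r)%nat) by (unfold r, rho_of; lia).
  assert (H2 : (2 ^ (h+1) <= r ^ (h+1))%nat) by (apply Nat.pow_le_mono_l; lia).
  assert (H4 : (4 <= 2 ^ (h+1))%nat).
  { replace (h+1)%nat with (S (S (h - 1))) by lia. simpl.
    assert (1 <= 2 ^ (h-1))%nat by (apply Nat.neq_0_lt_0, Nat.pow_nonzero; lia). lia. }
  set (b := ((h + 1) * (h + 1) * r ^ (h + 1))%nat).
  assert (Hb : (4 * (h+1) * (h+1) <= b)%nat).
  { unfold b. nia. }
  assert (He : (1 <= r ^ h)%nat) by (apply Nat.neq_0_lt_0, Nat.pow_nonzero; lia).
  assert (b ^ 1 <= b ^ (r ^ h))%nat by (apply Nat.pow_le_mono_r; lia).
  rewrite Nat.pow_1_r in H. lia.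
Qed.

Lemma piT_ge2 (h : nat) : (2 <= piT h)%nat.
Proof.
  unfold piT, pi_of.
  set (r := rho_of (levcard h) h).
  assert (Hr : (2 <= r)%nat) by (unfold r, rho_of; lia).
  assert (H2 : (1 <= r ^ (h+1))%nat) by (apply Nat.neq_0_lt_0, Nat.pow_nonzero; lia).
  set (b := ((h + 1) * (h + 1) * r ^ (h + 1))%nat).
  assert (Hb : (2 <= b)%nat).
  { unfold b. replace (h+1)%nat with (S h) by lia.
    assert (r ^ S h = r * r ^ h)%nat by reflexivity.
    assert (1 <= r ^ h)%nat by (apply Nat.neq_0_lt_0, Nat.pow_nonzero; lia). nia. }
  assert (He : (1 <= r ^ h)%nat) by (apply Nat.neq_0_lt_0, Nat.pow_nonzero; lia).
  assert (b ^ 1 <= b ^ (r ^ h))%nat by (apply Nat.pow_le_mono_r; lia).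
  rewrite Nat.pow_1_r in H. lia.
Qed.

Lemma aT_eq (h : nat) : aT h = (piT h ^ (h+2))%nat.
Proof. reflexivity. Qed.

Lemma MT_eq (h : nat) : MT h = (aT h * aT h)%nat.
Proof. reflexivity. Qed.

Lemma aT_ge_pow2 (h : nat) : (2 ^ (h+2) <= aT h)%nat.
Proof. rewrite aT_eq. apply Nat.pow_le_mono_l. apply piT_ge2. Qed.

Lemma aT_ge4 (h : nat) : (4 <= aT h)%nat.
Proof.
  pose proof (aT_ge_pow2 h).
  assert (4 <= 2 ^ (h+2))%nat.
  { replace (h+2)%nat with (S (S h)) by lia. simpl.
    assert (1 <= 2 ^ h)%nat by (apply Nat.neq_0_lt_0, Nat.pow_nonzero; lia). lia. }
  lia.
Qed.

Lemma aR_ge4 (h : nat) : 4 <= INR (aT h).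
Proof. pose proof (aT_ge4 h). apply le_INR in H. simpl in H. lra. Qed.

Lemma MR_eq (h : nat) : INR (MT h) = INR (aT h) * INR (aT h).
Proof. rewrite MT_eq, mult_INR. reflexivity. Qed.

Lemma Rpower_pos (x y : R) : 0 < Rpower x y.
Proof. unfold Rpower. apply exp_pos. Qed.

Lemma mu_to_miss (h n : nat) (x : R) :
  ege (mu h n) (1 + x) -> INR (MT h - n) <= Rpower (INR (aT h)) (1 - x).
Proof.
  unfold mu. destruct (Nat.ltb n (MT h)) eqn:E.
  - apply Nat.ltb_lt in E. simpl. intro H.
    pose proof (aR_ge4 h) as Ha.
    assert (Hla : 0 < ln (INR (aT h))) by (rewrite <- ln_1; apply ln_increasing; lra).
    assert (Hm : 0 < INR (MT h - n)) by (apply lt_0_INR; lia).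
    assert (HM : 0 < INR (MT h)) by (rewrite MR_eq; nra).
    assert (H1 : (1 + x) * ln (INR (aT h)) <= ln (INR (MT h) / INR (MT h - n))).
    { apply (Rmult_le_compat_r (ln (INR (aT h)))) in H; [|lra].
      replace (ln (INR (MT h) / INR (MT h - n)) / ln (INR (aT h)) * ln (INR (aT h)))
        with (ln (INR (MT h) / INR (MT h - n))) in H by (field; lra). lra. }
    unfold Rdiv in H1. rewrite ln_mult in H1 by (auto; apply Rinv_0_lt_compat; auto).
    rewrite ln_Rinv in H1 by auto.
    rewrite MR_eq, ln_mult in H1 by lra.
    unfold Rpower. rewrite <- (exp_ln (INR (MT h - n))) by auto.
    destruct (Rle_or_lt (ln (INR (MT h - n))) ((1 - x) * ln (INR (aT h)))) as [Hle|Hlt].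
    + destruct Hle as [Hlt|Heq]; [left; apply exp_increasing; auto | right; rewrite Heq; auto].
    + exfalso. nra.
  - apply Nat.ltb_ge in E. intros _. replace (MT h - n)%nat with 0%nat by lia.
    simpl. left. apply Rpower_pos.
Qed.

Lemma miss_to_mu (h n : nat) (x : R) :
  INR (MT h - n) <= Rpower (INR (aT h)) (1 - x) -> ege (mu h n) (1 + x).
Proof.
  unfold mu. destruct (Nat.ltb n (MT h)) eqn:E; simpl; auto.
  apply Nat.ltb_lt in E. intro H.
  pose proof (aR_ge4 h) as Ha.
  assert (Hla : 0 < ln (INR (aT h))) by (rewrite <- ln_1; apply ln_increasing; lra).
  assert (Hm : 0 < INR (MT h - n)) by (apply lt_0_INR; lia).
  assert (H1 : ln (INR (MT h - n)) <= (1 - x) * ln (INR (aT h))).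
  { unfold Rpower in H. destruct H as [H|H].
    - left. rewrite <- (ln_exp ((1 - x) * ln (INR (aT h)))). apply ln_increasing; auto.
    - right. rewrite H, ln_exp. auto. }
  apply (Rmult_le_reg_r (ln (INR (aT h)))); auto.
  unfold Rdiv. rewrite Rmult_assoc, Rinv_l, Rmult_1_r by lra.
  rewrite ln_mult by (auto; try (rewrite MR_eq; nra); apply Rinv_0_lt_compat; auto).
  rewrite ln_Rinv by auto. rewrite MR_eq, ln_mult by lra. lra.
Qed.

Lemma pdec_true (P : Prop) : P -> pdec P = true.
Proof. intro H. unfold pdec. destruct (excluded_middle_informative P); tauto. Qed.
Lemma pdec_false (P : Prop) : ~ P -> pdec P = false.
Proof. intro H. unfold pdec. destruct (excluded_middle_informative P); tauto. Qed.
Lemma pdec_iff (P : Prop) : pdec P = true <-> P.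
Proof. unfold pdec. destruct (excluded_middle_informative P); split; auto; discriminate. Qed.

Lemma pdec_true_inv (P : Prop) : pdec P = true -> P.
Proof. apply pdec_iff. Qed.

Definition indR (P : Prop) : R := if pdec P then 1 else 0.

Lemma indR_1 (P : Prop) : P -> indR P = 1.
Proof. intro H; unfold indR; rewrite pdec_true; auto. Qed.
Lemma indR_0 (P : Prop) : ~ P -> indR P = 0.
Proof. intro H; unfold indR; rewrite pdec_false; auto. Qed.
Lemma indR_01 (P : Prop) : 0 <= indR P <= 1.
Proof. unfold indR; destruct (pdec P); lra. Qed.

Fixpoint sumRf (f : nat -> R) (lo n : nat) : R :=
  match n with O => 0 | S n' => sumRf f lo n' + f (lo + n')%nat end.

Lemma countP_S (P : nat -> Prop) lo n :
  countP P lo (S n) = (countP P lo n + (if pdec (P (lo + n)%nat) then 1 else 0))%nat.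
Proof.
  unfold countP. rewrite seq_S, filter_app, length_app. simpl.
  destruct (pdec (P (lo+n)%nat)); simpl; lia.
Qed.

Lemma cntR (P : nat -> Prop) lo n :
  INR (countP P lo n) = sumRf (fun i => indR (P i)) lo n.
Proof.
  induction n; simpl. unfold countP; simpl; auto.
  rewrite countP_S, plus_INR, IHn. unfold indR. destruct (pdec (P (lo+n)%nat)); simpl; lra.
Qed.

Lemma sumRf_ext (f g : nat -> R) lo n :
  (forall i, (lo <= i < lo + n)%nat -> f i = g i) -> sumRf f lo n = sumRf g lo n.
Proof.
  induction n; simpl; intros; auto.
  rewrite IHn, H; auto; intros; try lia. apply H; lia.
Qed.

Lemma sumRf_le (f g : nat -> R) lo n :
  (forall i, (lo <= i < lo + n)%nat -> f i <= g i) -> sumRf f lo n <= sumRf g lo n.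
Proof.
  induction n; simpl; intros; [lra|].
  assert (sumRf f lo n <= sumRf g lo n) by (apply IHn; intros; apply H; lia).
  assert (f (lo+n)%nat <= g (lo+n)%nat) by (apply H; lia). lra.
Qed.

Lemma sumRf_plus (f g : nat -> R) lo n :
  sumRf (fun i => f i + g i) lo n = sumRf f lo n + sumRf g lo n.
Proof. induction n; simpl; lra. Qed.

Lemma sumRf_minus (f g : nat -> R) lo n :
  sumRf (fun i => f i - g i) lo n = sumRf f lo n - sumRf g lo n.
Proof. induction n; simpl; lra. Qed.

Lemma sumRf_scal (c : R) (f : nat -> R) lo n :
  sumRf (fun i => c * f i) lo n = c * sumRf f lo n.
Proof. induction n; simpl; lra. Qed.

Lemma sumRf_const (c : R) lo n : sumRf (fun _ => c) lo n = INR n * c.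
Proof. induction n; simpl; [lra|]. rewrite IHn. destruct n; simpl; lra. Qed.

Lemma sumRf_bound (f : nat -> R) (c : R) lo n :
  (forall i, (lo <= i < lo + n)%nat -> f i <= c) -> sumRf f lo n <= INR n * c.
Proof. intro H. rewrite <- (sumRf_const c lo n). apply sumRf_le. auto. Qed.

Lemma sumRf_nonneg (f : nat -> R) lo n :
  (forall i, (lo <= i < lo + n)%nat -> 0 <= f i) -> 0 <= sumRf f lo n.
Proof. intro H. replace 0 with (INR n * 0) by ring. rewrite <- (sumRf_const 0 lo n). apply sumRf_le. auto. Qed.

Lemma sumRf_exchange (f : nat -> nat -> R) lo1 n1 lo2 n2 :
  sumRf (fun i => sumRf (fun j => f i j) lo2 n2) lo1 n1 =
  sumRf (fun j => sumRf (fun i => f i j) lo1 n1) lo2 n2.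
Proof.
  induction n1; simpl.
  - rewrite sumRf_const. simpl. ring.
  - rewrite IHn1. rewrite <- sumRf_plus. reflexivity.
Qed.

Lemma sumRf_ge_term (f : nat -> R) lo n i :
  (forall i, (lo <= i < lo + n)%nat -> 0 <= f i) -> (lo <= i < lo + n)%nat -> f i <= sumRf f lo n.
Proof.
  induction n; simpl; intros; [lia|].
  destruct (Nat.eq_dec i (lo + n)).
  - subst. assert (0 <= sumRf f lo n) by (apply sumRf_nonneg; intros; apply H; lia). lra.
  - assert (f i <= sumRf f lo n) by (apply IHn; intros; try apply H; lia).
    assert (0 <= f (lo+n)%nat) by (apply H; lia). lra.
Qed.

Lemma count_markov (P : nat -> Prop) (f : nat -> R) (d : R) lo n :
  (forall i, (lo <= i < lo + n)%nat -> 0 <= f i) ->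
  (forall i, (lo <= i < lo + n)%nat -> P i -> d <= f i) ->
  INR (countP P lo n) * d <= sumRf f lo n.
Proof.
  intros H1 H2. rewrite cntR.
  rewrite Rmult_comm, <- sumRf_scal. apply sumRf_le. intros i Hi.
  unfold indR. destruct (pdec (P i)) eqn:E.
  - apply pdec_true_inv in E. rewrite Rmult_1_r. apply H2; auto.
  - rewrite Rmult_0_r. apply H1; auto.
Qed.

Lemma countP_le (P : nat -> Prop) lo n : (countP P lo n <= n)%nat.
Proof. unfold countP. rewrite <- (length_seq n lo) at 2. apply filter_length_le. Qed.

Lemma countP_compl (P : nat -> Prop) lo n :
  (countP P lo n + countP (fun i => ~ P i) lo n = n)%nat.
Proof.
  apply INR_eq. rewrite plus_INR, !cntR, <- sumRf_plus.
  rewrite <- (Rmult_1_r (INR n)), <- (sumRf_const 1 lo n). apply sumRf_ext. intros i _.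
  destruct (excluded_middle_informative (P i)).
  - rewrite indR_1, indR_0; auto; lra.
  - rewrite indR_0, indR_1; auto; lra.
Qed.

Lemma countP_mono (P Q : nat -> Prop) lo n :
  (forall i, (lo <= i < lo + n)%nat -> P i -> Q i) -> (countP P lo n <= countP Q lo n)%nat.
Proof.
  intro H. apply INR_le. rewrite !cntR. apply sumRf_le. intros i Hi.
  unfold indR. destruct (pdec (P i)) eqn:E1; destruct (pdec (Q i)) eqn:E2; try lra.
  apply pdec_true_inv in E1. rewrite pdec_true in E2; [discriminate|]. apply H; auto.
Qed.

Lemma countP_all (P : nat -> Prop) lo n :
  (forall i, (lo <= i < lo + n)%nat -> P i) -> countP P lo n = n.
Proof.
  intro H. apply INR_eq. rewrite cntR. rewrite <- (Rmult_1_r (INR n)), <- (sumRf_const 1 lo n).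
  apply sumRf_ext. intros. apply indR_1. auto.
Qed.

Lemma countP_none (P : nat -> Prop) lo n :
  (forall i, (lo <= i < lo + n)%nat -> ~ P i) -> countP P lo n = 0%nat.
Proof.
  intro H. apply INR_eq. rewrite cntR. simpl. rewrite <- (Rmult_0_r (INR n)), <- (sumRf_const 0 lo n).
  apply sumRf_ext. intros. apply indR_0. auto.
Qed.

Lemma countP_two (P : nat -> Prop) lo n :
  (2 <= countP P lo n)%nat -> exists a b, a <> b /\ P a /\ P b.
Proof.
  induction n; intros H.
  - unfold countP in H; simpl in H; lia.
  - rewrite countP_S in H. destruct (pdec (P (lo+n)%nat)) eqn:E.
    + apply pdec_true_inv in E.
      destruct (le_lt_dec 2 (countP P lo n)) as [H2|H2]; [apply IHn; auto|].
      assert (countP P lo n = 1%nat) by lia.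
      assert (exists a, (lo <= a < lo+n)%nat /\ P a) as [a [Ha1 Ha2]].
      { clear -H0. induction n. unfold countP in H0; simpl in H0; lia.
        rewrite countP_S in H0. destruct (pdec (P (lo+n)%nat)) eqn:E.
        - apply pdec_true_inv in E. exists (lo+n)%nat. split; auto; lia.
        - destruct IHn as [a [Ha Hb]]; [lia|]. exists a. split; auto; lia. }
      exists a, (lo+n)%nat. split; auto. lia.
    + apply IHn. lia.
Qed.

Lemma countP_pos (P : nat -> Prop) lo n :
  (1 <= countP P lo n)%nat -> exists a, (lo <= a < lo + n)%nat /\ P a.
Proof.
  induction n; intros H.
  - unfold countP in H; simpl in H; lia.
  - rewrite countP_S in H. destruct (pdec (P (lo+n)%nat)) eqn:E.
    + apply pdec_true_inv in E. exists (lo+n)%nat. split; auto; lia.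
    + destruct IHn as [a [Ha Hb]]; [lia|]. exists a. split; auto; lia.
Qed.

Lemma sumR_app (l1 l2 : list R) : sumR (l1 ++ l2) = sumR l1 + sumR l2.
Proof. induction l1; simpl; lra. Qed.

Lemma sumR_map_le (f g : nat -> R) (u : list nat) :
  (forall k, In k u -> f k <= g k) -> sumR (map f u) <= sumR (map g u).
Proof.
  induction u; simpl; intros; [lra|].
  assert (f a <= g a) by auto. assert (sumR (map f u) <= sumR (map g u)) by auto. lra.
Qed.

Lemma sumR_map_plus (f g : nat -> R) (u : list nat) :
  sumR (map (fun k => f k + g k) u) = sumR (map f u) + sumR (map g u).
Proof. induction u; simpl; lra. Qed.

Lemma sumR_map_minus (f g : nat -> R) (u : list nat) :
  sumR (map (fun k => f k - g k) u) = sumR (map f u) - sumR (map g u).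
Proof. induction u; simpl; lra. Qed.

Lemma sumR_map_scal (c : R) (f : nat -> R) (u : list nat) :
  sumR (map (fun k => c * f k) u) = c * sumR (map f u).
Proof. induction u; simpl; lra. Qed.

Lemma sumR_map_const (c : R) (u : list nat) :
  sumR (map (fun _ => c) u) = INR (length u) * c.
Proof. induction u; simpl; [lra|]. rewrite IHu. destruct (length u); simpl; lra. Qed.

Lemma sumR_map_nonneg (f : nat -> R) (u : list nat) :
  (forall k, In k u -> 0 <= f k) -> 0 <= sumR (map f u).
Proof. intro H. replace 0 with (INR (length u) * 0) by ring. rewrite <- sumR_map_const.
  apply sumR_map_le. auto. Qed.

Lemma sumR_sumRf_exchange (f : nat -> nat -> R) (u : list nat) lo n :
  sumR (map (fun k => sumRf (fun i => f k i) lo n) u) =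
  sumRf (fun i => sumR (map (fun k => f k i) u)) lo n.
Proof.
  induction u; simpl.
  - rewrite sumRf_const. simpl. ring.
  - rewrite IHu, <- sumRf_plus. reflexivity.
Qed.

Lemma sumR_filter_bound (G : nat -> bool) (f : nat -> R) (c : R) (u : list nat) :
  0 <= c -> (forall k, In k u -> 0 <= f k) -> (forall k, In k u -> G k = true -> c <= f k) ->
  INR (length (filter G u)) * c <= sumR (map f u).
Proof.
  induction u; simpl; intros Hc H1 H2; [lra|].
  assert (IH : INR (length (filter G u)) * c <= sumR (map f u)) by (apply IHu; auto).
  destruct (G a) eqn:E.
  - assert (c <= f a) by auto. replace (INR (length (a :: filter G u))) with (INR (length (filter G u)) + 1) by (simpl length; rewrite S_INR; auto). simpl. lra.
  - assert (0 <= f a) by auto. lra.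
Qed.

Lemma Xi_ext (Xi : (nat -> bool) -> R) (A B : nat -> bool) :
  (forall n, A n = B n) -> Xi A = Xi B.
Proof. intro H. f_equal. apply functional_extensionality. auto. Qed.

Lemma Xi_nonneg Xi : FAM Xi -> forall A, 0 <= Xi A.
Proof. intros [H _]. auto. Qed.

Lemma Xi_add Xi : FAM Xi -> forall A B, (forall n, andb (A n) (B n) = false) ->
  Xi (fun n => orb (A n) (B n)) = Xi A + Xi B.
Proof. intros [_ [_ [H _]]]. auto. Qed.

Lemma Xi_full Xi : FAM Xi -> Xi (fun _ => true) = 1.
Proof. intros [_ [H _]]. auto. Qed.

Lemma Xi_split Xi : FAM Xi -> forall A B,
  Xi A = Xi (fun n => A n && B n) + Xi (fun n => A n && negb (B n)).
Proof.
  intros HF A B. rewrite <- Xi_add; auto.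
  - apply Xi_ext. intro n. destruct (A n), (B n); reflexivity.
  - intro n. destruct (A n), (B n); reflexivity.
Qed.

Lemma Xi_empty Xi : FAM Xi -> Xi (fun _ => false) = 0.
Proof.
  intro HF. pose proof (Xi_split Xi HF (fun _ => false) (fun _ => false)).
  simpl in H. lra.
Qed.

Lemma Xi_mono Xi : FAM Xi -> forall A B, (forall n, A n = true -> B n = true) -> Xi A <= Xi B.
Proof.
  intros HF A B H. rewrite (Xi_split Xi HF B A).
  replace (Xi (fun n => B n && A n)) with (Xi A).
  - pose proof (Xi_nonneg Xi HF (fun n => B n && negb (A n))). lra.
  - apply Xi_ext. intro n. specialize (H n). destruct (A n), (B n); auto.
    symmetry; auto.
Qed.

Lemma Xi_le1 Xi : FAM Xi -> forall A, Xi A <= 1.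
Proof. intros HF A. rewrite <- (Xi_full Xi HF). apply Xi_mono; auto. Qed.

Lemma Xi_diff Xi : FAM Xi -> forall A S, Xi A - Xi S <= Xi (fun n => A n && negb (S n)).
Proof.
  intros HF A S. rewrite (Xi_split Xi HF A S).
  assert (Xi (fun n => A n && S n) <= Xi S) by (apply Xi_mono; auto; intro n; destruct (A n), (S n); auto).
  lra.
Qed.

Lemma Xi_initial Xi : FAM Xi -> forall K, Xi (fun n => Nat.ltb n K) = 0.
Proof.
  intros HF K. induction K.
  - rewrite <- (Xi_empty Xi HF). apply Xi_ext. intro n. destruct n; reflexivity.
  - assert (E : Xi (fun n => Nat.ltb n (S K)) = Xi (fun n => orb (Nat.ltb n K) (Nat.eqb n K))).
    { apply Xi_ext. intro n. destruct (Nat.ltb_spec n (S K)); destruct (Nat.ltb_spec n K);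
      destruct (Nat.eqb_spec n K); simpl; auto; lia. }
    rewrite E, Xi_add; auto.
    + rewrite IHK. destruct HF as [_ [_ [_ H4]]]. rewrite H4. lra.
    + intro n. destruct (Nat.ltb n K) eqn:E2; destruct (Nat.eqb n K) eqn:E3; auto.
      apply Nat.ltb_lt in E2. apply Nat.eqb_eq in E3. lia.
Qed.

Lemma Xi_pos_inf Xi : FAM Xi -> forall A, 0 < Xi A -> forall K, exists k, (K <= k)%nat /\ A k = true.
Proof.
  intros HF A HA K. destruct (classic (exists k, (K <= k)%nat /\ A k = true)) as [H|H]; auto.
  exfalso. assert (Xi A <= Xi (fun n => Nat.ltb n K)).
  { apply Xi_mono; auto. intros n Hn. apply Nat.ltb_lt.
    destruct (le_lt_dec K n); auto. exfalso; apply H; exists n; auto. }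
  rewrite Xi_initial in H0; auto. lra.
Qed.

Lemma Xi_pos_list Xi : FAM Xi -> forall A, 0 < Xi A -> forall n K,
  exists v, length v = n /\ NoDup v /\ forall x, In x v -> A x = true /\ (K <= x)%nat.
Proof.
  intros HF A HA n. induction n; intro K.
  - exists []. split; auto. split; [constructor|]. intros x [].
  - destruct (Xi_pos_inf Xi HF A HA K) as [k [Hk1 Hk2]].
    destruct (IHn (S k)) as [v [Hv1 [Hv2 Hv3]]].
    exists (k :: v). split; [simpl; auto|]. split.
    + constructor; auto. intro Hin. apply Hv3 in Hin. lia.
    + intros x [Hx|Hx]; [subst; auto|]. apply Hv3 in Hx. split; [tauto|lia].
Qed.

Lemma Xi_count Xi : FAM Xi -> forall M (S : nat -> nat -> bool) (U : nat -> bool) (c : R),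
  (forall l k, (l < M)%nat -> S l k = true -> U k = true) ->
  (forall k, U k = true -> INR (countP (fun l => S l k = true) 0 M) <= c) ->
  sumRf (fun l => Xi (S l)) 0 M <= c * Xi U.
Proof.
  intros HF M. induction M; intros S U c H1 H2.
  - simpl. destruct (Rle_or_lt 0 c).
    + pose proof (Xi_nonneg Xi HF U). nra.
    + destruct (Req_dec (Xi U) 0) as [E|E]; [rewrite E; lra|].
      assert (0 < Xi U) by (pose proof (Xi_nonneg Xi HF U); lra).
      destruct (Xi_pos_inf Xi HF U H0 0) as [k [_ Hk]].
      apply H2 in Hk. unfold countP in Hk. simpl in Hk. lra.
  - simpl. set (T := S M).
    assert (E1 : forall l, Xi (S l) = Xi (fun n => S l n && T n) + Xi (fun n => S l n && negb (T n)))
      by (intro; apply Xi_split; auto).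
    rewrite (sumRf_ext _ (fun l => Xi (fun n => S l n && T n) + Xi (fun n => S l n && negb (T n))))
      by (intros; apply E1).
    rewrite sumRf_plus.
    assert (IH1 : sumRf (fun l => Xi (fun n => S l n && T n)) 0 M <= (c - 1) * Xi T).
    { apply (IHM (fun l n => S l n && T n) T (c - 1)).
      - intros l k _ Hk. apply andb_prop in Hk. tauto.
      - intros k Hk. specialize (H2 k (H1 M k (Nat.lt_succ_diag_r M) Hk)).
        rewrite countP_S in H2. simpl in H2. unfold T in Hk. rewrite pdec_true in H2 by auto.
        rewrite plus_INR in H2. simpl in H2.
        replace (countP (fun l => S l k && T k = true) 0 M) with (countP (fun l => S l k = true) 0 M).
        + lra.
        + unfold countP. f_equal. apply filter_ext. intro l. unfold T. rewrite Hk, andb_true_r. auto. }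
    assert (IH2 : sumRf (fun l => Xi (fun n => S l n && negb (T n))) 0 M <= c * Xi (fun n => U n && negb (T n))).
    { apply (IHM (fun l n => S l n && negb (T n)) (fun n => U n && negb (T n)) c).
      - intros l k Hl Hk. apply andb_prop in Hk. destruct Hk as [Hk1 Hk2].
        rewrite (H1 l k); auto.
      - intros k Hk. apply andb_prop in Hk. destruct Hk as [Hk1 Hk2].
        specialize (H2 k Hk1). rewrite countP_S in H2. simpl in H2.
        rewrite plus_INR in H2.
        replace (countP (fun l => S l k && negb (T k) = true) 0 M) with (countP (fun l => S l k = true) 0 M).
        + assert (0 <= INR (if pdec (S M k = true) then 1%nat else 0%nat)) by apply pos_INR. lra.
        + unfold countP. f_equal. apply filter_ext. intro l. rewrite Hk2, andb_true_r. auto. }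
    assert (EU : Xi U = Xi T + Xi (fun n => U n && negb (T n))).
    { rewrite (Xi_split Xi HF U T). f_equal. apply Xi_ext. intro n.
      destruct (T n) eqn:ET; [|rewrite andb_false_r; auto].
      rewrite andb_true_r. apply H1 in ET; auto. }
    rewrite EU. simpl. lra.
Qed.

Lemma floor_exists (x : R) : 0 <= x -> exists n : nat, INR n <= x < INR n + 1.
Proof.
  intro Hx. destruct (archimed x) as [H1 H2].
  assert (Hz : (1 <= up x)%Z).
  { destruct (Z_lt_le_dec (up x) 1) as [Hl|Hl]; auto. exfalso.
    assert (Hl' : (up x <= 0)%Z) by lia. apply IZR_le in Hl'. simpl in Hl'. lra. }
  exists (Z.to_nat (up x - 1)). rewrite INR_IZR_INZ, Z2Nat.id by lia.
  rewrite minus_IZR. simpl. lra.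
Qed.

Definition sat (P A : nat -> bool) : Prop :=
  (forall k, P k = true -> A k = true) \/ (forall k, P k = true -> A k = false).

Fixpoint parts (L : list (nat -> bool)) : list (nat -> bool) :=
  match L with
  | [] => [fun _ => true]
  | S0 :: L' => flat_map (fun P => [fun n => P n && S0 n; fun n => P n && negb (S0 n)]) (parts L')
  end.

Lemma parts_cover (L : list (nat -> bool)) k :
  length (filter (fun P => P k) (parts L)) = 1%nat.
Proof.
  induction L; simpl; auto.
  rewrite <- IHL. clear IHL. induction (parts L); simpl; auto.
  destruct (a0 k), (a k); simpl; auto.
Qed.

Lemma parts_sat (L : list (nat -> bool)) :
  forall A P, In A L -> In P (parts L) -> sat P A.
Proof.
  induction L as [|S0 L IH]; simpl; intros A P HA HP; [contradiction|].
  apply in_flat_map in HP. destruct HP as [P0 [HP0 HP]].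
  simpl in HP. destruct HA as [HA|HA].
  - subst. destruct HP as [HP|[HP|[]]]; subst.
    + left. intros k Hk. apply andb_prop in Hk. tauto.
    + right. intros k Hk. apply andb_prop in Hk. destruct Hk. apply negb_true_iff. auto.
  - destruct (IH A P0 HA HP0) as [H|H]; destruct HP as [HP|[HP|[]]]; subst;
    [left|left|right|right]; intros k Hk; apply andb_prop in Hk; apply H; tauto.
Qed.

Lemma parts_sum Xi : FAM Xi -> forall (L : list (nat -> bool)) A,
  sumR (map (fun P => Xi (fun n => P n && A n)) (parts L)) = Xi A.
Proof.
  intros HF L. induction L as [|S0 L IH]; intro A; simpl.
  - rewrite Rplus_0_r. apply Xi_ext. intro; auto.
  - rewrite <- (IH A). clear IH. induction (parts L); simpl; auto.
    rewrite IHl. rewrite (Xi_split Xi HF (fun n => a n && A n) S0).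
    assert (E1 : Xi (fun n => a n && S0 n && A n) = Xi (fun n => a n && A n && S0 n))
      by (apply Xi_ext; intro n; destruct (a n), (S0 n), (A n); auto).
    assert (E2 : Xi (fun n => a n && negb (S0 n) && A n) = Xi (fun n => a n && A n && negb (S0 n)))
      by (apply Xi_ext; intro n; destruct (a n), (S0 n), (A n); auto).
    rewrite E1, E2. lra.
Qed.

Lemma filter_count_pos {T} (f : T -> bool) (l : list T) x :
  In x l -> f x = true -> (1 <= length (filter f l))%nat.
Proof.
  intros H1 H2. assert (In x (filter f l)) by (apply filter_In; auto).
  destruct (filter f l); simpl in *; [contradiction|lia].
Qed.

Lemma filter_all_true (A : nat -> bool) (v : list nat) :
  (forall x, In x v -> A x = true) -> filter A v = v.
Proof. induction v; simpl; intros; auto. rewrite H by auto. rewrite IHv; auto. Qed.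

Lemma filter_all_false (A : nat -> bool) (v : list nat) :
  (forall x, In x v -> A x = false) -> filter A v = [].
Proof. induction v; simpl; intros; auto. rewrite H by auto. rewrite IHv; auto. Qed.

Lemma build Xi : FAM Xi -> forall (Ps : list (nat -> bool)),
  (forall k, (length (filter (fun P => P k) Ps) <= 1)%nat) ->
  forall (N : R) K, 0 <= N ->
  exists u, NoDup u /\
    (forall x, In x u -> (K <= x)%nat /\ exists P, In P Ps /\ P x = true) /\
    forall A, (forall P, In P Ps -> sat P A) ->
      N * sumR (map (fun P => Xi (fun n => P n && A n)) Ps) - INR (length Ps)
        <= INR (length (filter A u)) /\
      INR (length (filter A u)) <= N * sumR (map (fun P => Xi (fun n => P n && A n)) Ps).
Proof.
  intros HF Ps. induction Ps as [|P Ps IH]; intros Hdisj N K HN.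
  - exists []. split; [constructor|]. split; [intros x []|].
    intros A _. simpl. lra.
  - destruct (IH) with (N := N) (K := K) as [u' [Hu1 [Hu2 Hu3]]]; auto.
    { intro k. specialize (Hdisj k). simpl in Hdisj. destruct (P k); simpl in Hdisj; lia. }
    assert (HXP : 0 <= N * Xi P) by (apply Rmult_le_pos; auto; apply Xi_nonneg; auto).
    destruct (floor_exists _ HXP) as [np [Hnp1 Hnp2]].
    assert (Hv : exists v, length v = np /\ NoDup v /\ forall x, In x v -> P x = true /\ (K <= x)%nat).
    { destruct np.
      - exists []. split; auto. split; [constructor|]. intros x [].
      - apply (Xi_pos_list Xi); auto.
        destruct (Rle_or_lt (Xi P) 0); auto. exfalso.
        assert (N * Xi P <= 0) by nra. rewrite S_INR in Hnp1.
        pose proof (pos_INR np). lra. }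
    destruct Hv as [v [Hv1 [Hv2 Hv3]]].
    exists (v ++ u'). split; [|split].
    + apply NoDup_app; auto. intros x Hx Hx'.
      apply Hv3 in Hx. apply Hu2 in Hx'. destruct Hx' as [_ [P' [HP' HP'x]]].
      specialize (Hdisj x). simpl in Hdisj. rewrite (proj1 Hx) in Hdisj. simpl in Hdisj.
      pose proof (filter_count_pos (fun P => P x) Ps P' HP' HP'x). lia.
    + intros x Hx. apply in_app_or in Hx. destruct Hx as [Hx|Hx].
      * apply Hv3 in Hx. split; [tauto|]. exists P. split; [left; auto|tauto].
      * apply Hu2 in Hx. destruct Hx as [HK [P' [HP' HP'x]]]. split; auto.
        exists P'. split; [right; auto|auto].
    + intros A HA. specialize (Hu3 A (fun P' H => HA P' (or_intror H))).
      rewrite filter_app, length_app, plus_INR. simpl map. simpl sumR. simpl length.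
      rewrite S_INR.
      destruct (HA P (or_introl eq_refl)) as [Hs|Hs].
      * assert (E1 : length (filter A v) = np).
        { rewrite <- Hv1. rewrite filter_all_true; auto.
          intros x Hx. apply Hs. apply Hv3; auto. }
        assert (E2 : Xi (fun n => P n && A n) = Xi P).
        { apply Xi_ext. intro n. destruct (P n) eqn:E; simpl; auto. }
        rewrite E1, E2. split; nra.
      * assert (E1 : length (filter A v) = 0%nat).
        { rewrite filter_all_false; auto. intros x Hx. apply Hs. apply Hv3; auto. }
        assert (E2 : Xi (fun n => P n && A n) = 0).
        { rewrite <- (Xi_empty Xi HF). apply Xi_ext. intro n. destruct (P n) eqn:E; simpl; auto. }
        rewrite E1, E2. simpl. split; nra.
Qed.

Lemma ratio_bounds (N r X c n eps : R) :
  0 < eps -> 0 <= r -> 0 <= X <= 1 -> eps * (N - r) = r + 1 ->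
  N - r <= n <= N -> N * X - r <= c <= N * X -> 0 <= c ->
  X - eps < c / n < X + eps.
Proof.
  intros He Hr HX HN Hn Hc Hc0.
  assert (HNr : 0 < N - r) by nra.
  assert (Hnp : 0 < n) by lra.
  split.
  - apply (Rmult_lt_reg_r n); auto. unfold Rdiv. rewrite Rmult_assoc, Rinv_l, Rmult_1_r by lra.
    destruct (Rle_or_lt 0 (X - eps)).
    + assert ((X - eps) * n <= (X - eps) * N) by (apply Rmult_le_compat_l; lra). nra.
    + nra.
  - apply (Rmult_lt_reg_r n); auto. unfold Rdiv. rewrite Rmult_assoc, Rinv_l, Rmult_1_r by lra.
    assert ((X + eps) * (N - r) <= (X + eps) * n) by (apply Rmult_le_compat_l; lra). nra.
Qed.

Lemma approx Xi : FAM Xi -> forall (L : list (nat -> bool)) (eps : R) (K : nat), 0 < eps ->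
  exists u, u <> [] /\ NoDup u /\ (forall x, In x u -> (K <= x)%nat) /\
    forall A, In A L ->
      Xi A - eps < INR (length (filter A u)) / INR (length u) /\
      INR (length (filter A u)) / INR (length u) < Xi A + eps.
Proof.
  intros HF L eps K He.
  set (r := INR (length (parts L))).
  assert (Hr : 0 <= r) by apply pos_INR.
  set (N := r + (r + 1) / eps).
  assert (HN : eps * (N - r) = r + 1) by (unfold N; field; lra).
  assert (HN0 : 0 <= N) by (unfold N; assert (0 <= (r+1)/eps) by (unfold Rdiv; apply Rmult_le_pos; [lra|left; apply Rinv_0_lt_compat; lra]); lra).
  destruct (build Xi HF (parts L)) with (N := N) (K := K) as [u [Hu1 [Hu2 Hu3]]]; auto.
  { intro k. rewrite parts_cover. auto. }
  assert (Hfull := Hu3 (fun _ => true)).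
  rewrite parts_sum in Hfull by auto. rewrite Xi_full in Hfull by auto.
  rewrite filter_all_true in Hfull by auto.
  destruct Hfull as [Hf1 Hf2]. { intros P _. left. auto. }
  fold r in Hf1.
  assert (Hun : u <> []).
  { intro E. rewrite E in Hf1. simpl in Hf1. nra. }
  exists u. split; auto. split; auto. split; [intros x Hx; apply Hu2; auto|].
  intros A HA.
  destruct (Hu3 A) as [H1 H2]. { intros P HP. apply (parts_sat L); auto. }
  rewrite parts_sum in H1, H2 by auto. fold r in H1.
  apply (ratio_bounds N r); auto.
  - split; [apply Xi_nonneg|apply Xi_le1]; auto.
  - lra.
  - apply pos_INR.
Qed.

Lemma prefix_refl s : prefix s s.
Proof. exists []. rewrite app_nil_r. auto. Qed.

Lemma prefix_app s r : prefix s (s ++ r).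
Proof. exists r. auto. Qed.

Lemma prefix_trans a b c : prefix a b -> prefix b c -> prefix a c.
Proof. intros [r1 H1] [r2 H2]. subst. exists (r1 ++ r2). rewrite app_assoc. auto. Qed.

Lemma prefix_length s t : prefix s t -> (length s <= length t)%nat.
Proof. intros [r H]. subst. rewrite length_app. lia. Qed.

Lemma prefix_nil s : prefix [] s.
Proof. exists s. auto. Qed.

Lemma prefix_eq_len s t : prefix s t -> length s = length t -> s = t.
Proof. intros [r H] E. subst. rewrite length_app in E. destruct r; [rewrite app_nil_r; auto|simpl in E; lia]. Qed.

Lemma prefix_cons_inv a s b t : prefix (a :: s) (b :: t) -> a = b /\ prefix s t.
Proof. intros [r H]. simpl in H. inversion H. split; auto. exists r; auto. Qed.

Lemma prefix_comparable x y z : prefix x z -> prefix y z -> prefix x y \/ prefix y x.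
Proof.
  revert y z. induction x as [|a x IH]; intros y z Hx Hy.
  - left. apply prefix_nil.
  - destruct y as [|b y]. right. apply prefix_nil.
    destruct z as [|c z]. destruct Hx as [r Hr]; discriminate.
    apply prefix_cons_inv in Hx. apply prefix_cons_inv in Hy.
    destruct Hx as [E1 Hx], Hy as [E2 Hy]. subst.
    destruct (IH y z Hx Hy) as [[r H]|[r H]]; [left|right]; exists r; subst; auto.
Qed.

Lemma prefix_snoc s t x : prefix s (t ++ [x]) -> prefix s t \/ s = t ++ [x].
Proof.
  intro H. destruct (prefix_comparable s t (t ++ [x]) H (prefix_app t [x])) as [H1|H1]; auto.
  destruct H1 as [r Hr]. subst. destruct H as [r' Hr'].
  rewrite <- app_assoc in Hr'. apply app_inv_head in Hr'.
  destruct r as [|y r]. left; rewrite app_nil_r; apply prefix_refl.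
  simpl in Hr'. inversion Hr'. destruct r; [|discriminate]. subst. right. auto.
Qed.

Lemma subtree_prefix p s t : subtree p -> p t -> prefix s t -> p s.
Proof. intros [_ [_ H]] Ht [r Hr]. subst. apply (H s r). auto. Qed.

Lemma Tstar_prefix s t : Tstar t -> prefix s t -> Tstar s.
Proof.
  intros H [r Hr] i Hi. subst. specialize (H i). rewrite length_app in H.
  rewrite app_nth1 in H by auto. apply H. lia.
Qed.

Lemma Tstar_snoc t l : Tstar t -> (l < MT (length t))%nat -> Tstar (t ++ [l]).
Proof.
  intros H Hl i Hi. rewrite length_app in Hi. simpl in Hi.
  destruct (Nat.eq_dec i (length t)).
  - subst. rewrite app_nth2 by lia. rewrite Nat.sub_diag. simpl. auto.
  - rewrite app_nth1 by lia. apply H. lia.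
Qed.

Lemma econd_subtree (p : Econd) : subtree (proj1_sig p).
Proof. destruct p as [p0 Hp]. simpl. apply Hp. Qed.

Lemma stem_len_unique p s1 s2 : is_stem p s1 -> is_stem p s2 -> length s1 = length s2.
Proof.
  intros [H1 [H2 H3]] [H4 [H5 H6]].
  specialize (H3 s2 H4 H5). specialize (H6 s1 H1 H2). lia.
Qed.

Lemma miss_eq (p : Tree) t :
  INR (MT (length t) - nsucc p t) = sumRf (fun l => indR (~ p (t ++ [l]))) 0 (MT (length t)).
Proof.
  rewrite <- cntR. unfold nsucc.
  pose proof (countP_compl (fun l => p (t ++ [l])) 0 (MT (length t))). f_equal. lia.
Qed.

Lemma nsucc_le p t : (nsucc p t <= MT (length t))%nat.
Proof. apply countP_le. Qed.

Lemma Rpower_le_a (h : nat) (x : R) : 0 <= x -> Rpower (INR (aT h)) (1 - x) <= INR (aT h).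
Proof.
  intro Hx. pose proof (aR_ge4 h). rewrite <- (Rpower_1 (INR (aT h))) at 2 by lra.
  apply Rle_Rpower; lra.
Qed.

Lemma miss_small (h n : nat) (x : R) :
  0 <= x -> INR (MT h - n) <= Rpower (INR (aT h)) (1 - x) -> (2 <= n)%nat.
Proof.
  intros Hx H. pose proof (Rpower_le_a h x Hx).
  assert (H1 : (MT h - n <= aT h)%nat) by (apply INR_le; lra).
  pose proof (aT_ge4 h). rewrite MT_eq in H1. nia.
Qed.

Lemma econd_data (p : Econd) : exists st, is_stem (proj1_sig p) st /\ (1 <= length st)%nat /\
  forall t, proj1_sig p t -> prefix st t ->
  INR (MT (length t) - nsucc (proj1_sig p) t) <= Rpower (INR (aT (length t))) (1 - 1 / INR (length st)).
Proof.
  destruct p as [p [Hsub [st [Hst [Hlen Hn]]]]]. simpl. exists st. split; auto. split; auto.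
  intros t Ht Hpre. apply mu_to_miss. apply Hn; auto.
Qed.

Lemma inv_pos_le1 (n : nat) : (1 <= n)%nat -> 0 <= 1 / INR n.
Proof. intro H. apply le_INR in H. simpl in H. unfold Rdiv. rewrite Rmult_1_l. left. apply Rinv_0_lt_compat. lra. Qed.

Lemma succ_exists (p : Tree) t x :
  0 <= x -> INR (MT (length t) - nsucc p t) <= Rpower (INR (aT (length t))) (1 - x) ->
  exists l, (l < MT (length t))%nat /\ p (t ++ [l]).
Proof.
  intros Hx H. pose proof (miss_small _ _ _ Hx H).
  destruct (countP_pos (fun l => p (t ++ [l])) 0 (MT (length t))) as [l [Hl1 Hl2]].
  - unfold nsucc in H0. lia.
  - exists l. split; auto. lia.
Qed.

Lemma econd_climb (p : Econd) st :
  is_stem (proj1_sig p) st -> (1 <= length st)%nat ->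
  (forall t, proj1_sig p t -> prefix st t ->
    INR (MT (length t) - nsucc (proj1_sig p) t) <= Rpower (INR (aT (length t))) (1 - 1 / INR (length st))) ->
  forall n, exists t, proj1_sig p t /\ prefix st t /\ length t = (length st + n)%nat.
Proof.
  intros Hst Hl Hn n. induction n.
  - exists st. split; [apply Hst|]. split; [apply prefix_refl|lia].
  - destruct IHn as [t [Ht1 [Ht2 Ht3]]].
    destruct (succ_exists (proj1_sig p) t (1 / INR (length st))) as [l [_ Hl']].
    + apply inv_pos_le1; auto.
    + apply Hn; auto.
    + exists (t ++ [l]). split; auto. split.
      * apply (prefix_trans _ t); auto. apply prefix_app.
      * rewrite length_app. simpl. lia.
Qed.

Definition gk (start : nat -> nat) (qs : nat -> Econd) (k : nat) (t : list nat) : R :=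
  INR (countP (fun l => proj1_sig (qs l) t) (start k) (Ilen start k)) / INR (Ilen start k).

Lemma Ilen_pos start : interval_partition start -> forall k, (1 <= Ilen start k)%nat.
Proof. intros [_ [H _]] k. unfold Ilen. specialize (H k). lia. Qed.

Lemma IlenR_pos start : interval_partition start -> forall k, 0 < INR (Ilen start k).
Proof. intros H k. apply lt_0_INR. pose proof (Ilen_pos start H k). lia. Qed.

Lemma gk_range start qs k t : interval_partition start -> 0 <= gk start qs k t <= 1.
Proof.
  intro HI. unfold gk. pose proof (IlenR_pos start HI k).
  pose proof (countP_le (fun l => proj1_sig (qs l) t) (start k) (Ilen start k)).
  apply le_INR in H0. pose proof (pos_INR (countP (fun l => proj1_sig (qs l) t) (start k) (Ilen start k))).
  split.
  - unfold Rdiv. apply Rmult_le_pos; auto. left. apply Rinv_0_lt_compat. auto.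
  - unfold Rdiv. apply (Rmult_le_reg_r (INR (Ilen start k))); auto.
    rewrite Rmult_assoc, Rinv_l, Rmult_1_r, Rmult_1_l by lra. auto.
Qed.

Lemma gk_mono start qs k t t' : interval_partition start -> prefix t t' -> gk start qs k t' <= gk start qs k t.
Proof.
  intros HI Hp. unfold gk. pose proof (IlenR_pos start HI k).
  unfold Rdiv. apply Rmult_le_compat_r; [left; apply Rinv_0_lt_compat; auto|].
  apply le_INR. apply countP_mono. intros l _ Hl.
  apply (subtree_prefix _ _ t'); auto. apply econd_subtree.
Qed.

Lemma indR_not (P : Prop) : 1 - indR P = indR (~ P).
Proof.
  destruct (excluded_middle_informative P).
  - rewrite indR_1, indR_0 by tauto. ring.
  - rewrite indR_0, indR_1 by tauto. ring.
Qed.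

Lemma gk_drop_sum start qs k t hs m :
  interval_partition start ->
  (forall l, loss_ok (proj1_sig (qs l)) hs m) -> (hs <= length t)%nat ->
  sumRf (fun x => gk start qs k t - gk start qs k (t ++ [x])) 0 (MT (length t))
    <= Rpower (INR (aT (length t))) (1 - 1 / INR m).
Proof.
  intros HI Hloss Hh.
  set (L := Ilen start k). set (lo := start k). set (A := Rpower (INR (aT (length t))) (1 - 1 / INR m)).
  assert (HL : 0 < INR L) by (apply IlenR_pos; auto).
  assert (E : forall x, gk start qs k t - gk start qs k (t ++ [x]) =
     / INR L * sumRf (fun l => indR (proj1_sig (qs l) t) - indR (proj1_sig (qs l) (t ++ [x]))) lo L).
  { intro x. unfold gk. fold L lo. rewrite !cntR, sumRf_minus. unfold Rdiv. ring. }
  rewrite (sumRf_ext _ _ 0 (MT (length t)) (fun x _ => E x)).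
  rewrite sumRf_scal, sumRf_exchange.
  assert (Hper : forall l, sumRf (fun x => indR (proj1_sig (qs l) t) - indR (proj1_sig (qs l) (t ++ [x]))) 0 (MT (length t)) <= A).
  { intro l. destruct (excluded_middle_informative (proj1_sig (qs l) t)) as [Ht|Ht].
    - rewrite indR_1 by auto.
      rewrite (sumRf_ext _ (fun x => indR (~ proj1_sig (qs l) (t ++ [x])))) by (intros; apply indR_not).
      rewrite <- miss_eq. apply mu_to_miss.
      destruct (Hloss l) as [_ [_ H]]. apply H; auto.
    - rewrite (sumRf_ext _ (fun _ => 0)).
      + rewrite sumRf_const. rewrite Rmult_0_r. left. apply Rpower_pos.
      + intros x _. rewrite !indR_0; [ring| |auto].
        intro Hx. apply Ht. apply (subtree_prefix _ _ (t ++ [x])); auto. apply econd_subtree. apply prefix_app. }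
  assert (sumRf (fun l => sumRf (fun x => indR (proj1_sig (qs l) t) - indR (proj1_sig (qs l) (t ++ [x]))) 0 (MT (length t))) lo L <= INR L * A)
    by (apply sumRf_bound; intros; apply Hper).
  apply (Rmult_le_compat_l (/ INR L)) in H; [|left; apply Rinv_0_lt_compat; auto].
  rewrite <- Rmult_assoc, Rinv_l, Rmult_1_l in H by lra. auto.
Qed.

Definition eta (hs h : nat) : R := 1 / (2 * (INR hs - 1)) - 1 / (2 * (INR h - 1)).

Definition Gset (start : nat -> nat) (qs : nat -> Econd) (hs : nat) (t : list nat) : nat -> bool :=
  fun k => pdec (1 - eta hs (length t) <= gk start qs k t).

Definition good (Xi : (nat -> bool) -> R) start qs hs t : Prop :=
  1 - eta hs (length t) <= Xi (Gset start qs hs t).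

Lemma eta_step hs h : (2 <= hs <= h)%nat ->
  eta hs h + 2 * (1 / (4 * INR h * INR h)) <= eta hs (S h).
Proof.
  intro H. unfold eta. rewrite S_INR.
  assert (Hh : 2 <= INR h) by (apply (le_INR 2); lia).
  assert (1 / (2 * (INR h - 1)) - 1 / (2 * (INR h + 1 - 1)) = 1 / (2 * INR h * (INR h - 1))) by (field; lra).
  assert (1 / (2 * INR h * INR h) <= 1 / (2 * INR h * (INR h - 1))).
  { apply Rmult_le_compat_l; [lra|]. apply Rinv_le_contravar; nra. }
  assert (2 * (1 / (4 * INR h * INR h)) = 1 / (2 * INR h * INR h)) by (field; lra).
  lra.
Qed.

Lemma eta_bounds hs h : (2 <= hs <= h)%nat -> 0 <= eta hs h <= 1 / (2 * (INR hs - 1)).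
Proof.
  intro H. unfold eta.
  assert (Hs : 2 <= INR hs) by (apply (le_INR 2); lia).
  assert (Hh : INR hs <= INR h) by (apply le_INR; lia).
  assert (0 < 1 / (2 * (INR h - 1))) by (unfold Rdiv; rewrite Rmult_1_l; apply Rinv_0_lt_compat; lra).
  split; [|lra].
  assert (1 / (2 * (INR h - 1)) <= 1 / (2 * (INR hs - 1))).
  { unfold Rdiv. rewrite !Rmult_1_l. apply Rinv_le_contravar; lra. }
  lra.
Qed.

Lemma eta_hs hs : eta hs hs = 0.
Proof. unfold eta. ring. Qed.

Lemma pdec_false_inv (P : Prop) : pdec P = false -> ~ P.
Proof. intros H HP. rewrite pdec_true in H by auto. discriminate. Qed.

Lemma good_succ Xi start qs hs t l : FAM Xi -> interval_partition start ->
  (2 <= hs <= length t)%nat -> good Xi start qs hs t ->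
  Xi (fun k => pdec (gk start qs k (t ++ [l]) < gk start qs k t - 1 / (4 * INR (length t) * INR (length t))))
    <= 1 / (4 * INR (length t) * INR (length t)) ->
  good Xi start qs hs (t ++ [l]).
Proof.
  intros HF HI Hh Hg HS. unfold good in *.
  set (d := 1 / (4 * INR (length t) * INR (length t))) in *.
  set (Sl := fun k => pdec (gk start qs k (t ++ [l]) < gk start qs k t - d)) in *.
  assert (Hlen : length (t ++ [l]) = S (length t)) by (rewrite length_app; simpl; lia).
  pose proof (eta_step hs (length t) Hh) as Hst. fold d in Hst.
  assert (Hd : 0 <= d).
  { unfold d. assert (2 <= INR (length t)) by (apply (le_INR 2); lia).
    unfold Rdiv. rewrite Rmult_1_l. left. apply Rinv_0_lt_compat. nra. }
  assert (Hsub : Xi (fun k => Gset start qs hs t k && negb (Sl k)) <= Xi (Gset start qs hs (t ++ [l]))).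
  { apply Xi_mono; auto. intros k Hk. apply andb_prop in Hk. destruct Hk as [H1 H2].
    apply negb_true_iff in H2. apply pdec_false_inv in H2. apply pdec_true_inv in H1.
    unfold Gset. apply pdec_true. rewrite Hlen. lra. }
  pose proof (Xi_diff Xi HF (Gset start qs hs t) Sl).
  rewrite Hlen. lra.
Qed.

Lemma key_bound (h hs m : nat) : (2 <= m)%nat -> (3 * m < hs)%nat -> (hs <= h)%nat ->
  (4 * INR h * INR h) * (4 * INR h * INR h) * Rpower (INR (aT h)) (1 - 1 / INR m)
    <= Rpower (INR (aT h)) (1 - 1 / INR hs).
Proof.
  intros Hm Hs Hh.
  assert (Hm' : 2 <= INR m) by (apply (le_INR 2); lia).
  assert (Hs' : 3 * INR m + 1 <= INR hs) by (replace 3 with (INR 3) by (simpl; ring); rewrite <- mult_INR, <- S_INR; apply le_INR; lia).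
  assert (Hh' : INR hs <= INR h) by (apply le_INR; lia).
  pose proof (aR_ge4 h) as Ha.
  replace (1 - 1 / INR hs) with ((1 - 1 / INR m) + (1 / INR m - 1 / INR hs)) by ring.
  rewrite Rpower_plus.
  rewrite (Rmult_comm (Rpower _ (1 - 1 / INR m))).
  apply Rmult_le_compat_r; [left; apply Rpower_pos|].
  assert (Hexp : 2 / (INR h + 2) <= 1 / INR m - 1 / INR hs).
  { assert (E : 1 / INR m - 1 / INR hs = (INR hs - INR m) / (INR m * INR hs)) by (field; lra).
    rewrite E. unfold Rdiv. apply (Rmult_le_reg_r ((INR h + 2) * (INR m * INR hs))); [repeat apply Rmult_lt_0_compat; lra|].
    replace (2 * / (INR h + 2) * ((INR h + 2) * (INR m * INR hs))) with (2 * (INR m * INR hs)) by (field; lra).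
    replace ((INR hs - INR m) * / (INR m * INR hs) * ((INR h + 2) * (INR m * INR hs)))
      with ((INR hs - INR m) * (INR h + 2)) by (field; nra).
    nra. }
  apply (Rle_trans _ (Rpower (INR (aT h)) (2 / (INR h + 2)))); [|apply Rle_Rpower; lra].
  rewrite aT_eq, pow_INR.
  assert (Hp : 0 < INR (piT h)) by (pose proof (piT_ge2 h); apply lt_0_INR; lia).
  rewrite <- Rpower_pow by auto. rewrite Rpower_mult.
  replace (INR (h + 2) * (2 / (INR h + 2))) with (INR 2).
  2:{ rewrite plus_INR. simpl. field. pose proof (pos_INR h). lra. }
  rewrite Rpower_pow by auto.
  pose proof (piT_ge h ltac:(lia)) as Hpi. apply le_INR in Hpi.
  rewrite !mult_INR, plus_INR in Hpi. replace (INR 4) with 4 in Hpi by (simpl; ring).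
  replace (INR 1) with 1 in Hpi by (simpl; ring).
  pose proof (pos_INR h) as Hh0. simpl pow.
  set (P := INR (piT h)) in *. set (X := INR h) in *.
  assert (0 <= 4 * X * X) by nra.
  assert (4 * X * X <= 4 * (X + 1) * (X + 1)) by nra.
  assert (4 * X * X <= P) by lra.
  assert ((4 * X * X) * (4 * X * X) <= P * P) by (apply Rmult_le_compat; lra).
  lra.
Qed.

Lemma lim_norm Xi start qs hs m t : FAM Xi -> interval_partition start ->
  (forall l, loss_ok (proj1_sig (qs l)) hs m) -> (hs <= length t)%nat ->
  good Xi start qs hs t ->
  INR (MT (length t) - countP (fun x => good Xi start qs hs (t ++ [x])) 0 (MT (length t)))
    <= Rpower (INR (aT (length t))) (1 - 1 / INR hs).
Proof.
  intros HF HI Hloss Hh Hg.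
  destruct (Hloss 0%nat) as [Hm [Hs _]].
  set (h := length t) in *. set (M := MT h).
  set (d := 1 / (4 * INR h * INR h)).
  assert (HhR : 2 <= INR h) by (apply (le_INR 2); lia).
  assert (Hd : 0 < d) by (unfold d; unfold Rdiv; rewrite Rmult_1_l; apply Rinv_0_lt_compat; nra).
  set (A := Rpower (INR (aT h)) (1 - 1 / INR m)).
  set (Sl := fun x k => pdec (gk start qs k (t ++ [x]) < gk start qs k t - d)).
  assert (Hii : forall k, INR (countP (fun x => Sl x k = true) 0 M) <= A / d).
  { intro k.
    assert (H1 : INR (countP (fun x => Sl x k = true) 0 M) * d
                 <= sumRf (fun x => gk start qs k t - gk start qs k (t ++ [x])) 0 M).
    { apply count_markov.
      - intros x _. pose proof (gk_mono start qs k t (t ++ [x]) HI (prefix_app t [x])). lra.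
      - intros x _ Hx. apply pdec_true_inv in Hx. lra. }
    pose proof (gk_drop_sum start qs k t hs m HI Hloss Hh). fold h M A in H.
    apply (Rmult_le_reg_r d); auto. unfold Rdiv. rewrite Rmult_assoc, Rinv_l, Rmult_1_r by lra. lra. }
  assert (Hiii : sumRf (fun x => Xi (Sl x)) 0 M <= A / d * Xi (fun _ => true)).
  { apply Xi_count; auto. }
  rewrite Xi_full, Rmult_1_r in Hiii by auto.
  assert (Hv : INR (countP (fun x => ~ good Xi start qs hs (t ++ [x])) 0 M) * d <= A / d).
  { eapply Rle_trans; [|apply Hiii]. apply count_markov.
    - intros; apply Xi_nonneg; auto.
    - intros x _ Hx. destruct (Rle_or_lt d (Xi (Sl x))); auto. exfalso. apply Hx.
      apply good_succ; auto. lia. left. auto. }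
  assert (Hcnt : INR (countP (fun x => ~ good Xi start qs hs (t ++ [x])) 0 M) <= (4 * INR h * INR h) * (4 * INR h * INR h) * A).
  { apply (Rmult_le_compat_r (/ d)) in Hv; [|left; apply Rinv_0_lt_compat; auto].
    rewrite Rmult_assoc, Rinv_r, Rmult_1_r in Hv by lra.
    replace ((4 * INR h * INR h) * (4 * INR h * INR h) * A) with (A / d * / d); auto.
    unfold d. field. nra. }
  pose proof (countP_compl (fun x => good Xi start qs hs (t ++ [x])) 0 M) as Hc. cbv beta in Hc.
  replace (M - countP (fun x => good Xi start qs hs (t ++ [x])) 0 M)%nat
    with (countP (fun x => ~ good Xi start qs hs (t ++ [x])) 0 M) by lia.
  eapply Rle_trans; [apply Hcnt|]. apply key_bound; auto. 
Qed.

Definition Pseq (qs : nat -> Econd) (s : list nat) (m : nat) : Prop :=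
  forall l, stem_is (qs l) s /\ loss_ok (proj1_sig (qs l)) (length s) m.

Definition limtree Xi start (qs : nat -> Econd) (s : list nat) : Tree :=
  fun t => prefix t s \/ (prefix s t /\ Tstar t /\
    forall t0, prefix s t0 -> prefix t0 t -> good Xi start qs (length s) t0).

Lemma good_stem Xi start qs s m : FAM Xi -> interval_partition start -> Pseq qs s m ->
  good Xi start qs (length s) s.
Proof.
  intros HF HI HP. unfold good. rewrite eta_hs.
  replace (Xi (Gset start qs (length s) s)) with (Xi (fun _ => true)).
  - rewrite Xi_full by auto. lra.
  - apply Xi_ext. intro k. unfold Gset. symmetry. apply pdec_true. rewrite eta_hs.
    unfold gk. rewrite countP_all.
    + unfold Rdiv. rewrite Rinv_r. lra. pose proof (IlenR_pos start HI k). lra.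
    + intros l _. destruct (HP l) as [[H _] _]. auto.
Qed.

Lemma Tstar_stem qs s m : Pseq qs s m -> Tstar s.
Proof.
  intro HP. destruct (HP 0%nat) as [[H _] _]. pose proof (econd_subtree (qs 0%nat)) as [_ [HT _]]. auto.
Qed.

Lemma limtree_right Xi start qs s m t : FAM Xi -> interval_partition start -> Pseq qs s m ->
  limtree Xi start qs s t -> prefix s t ->
  Tstar t /\ forall t0, prefix s t0 -> prefix t0 t -> good Xi start qs (length s) t0.
Proof.
  intros HF HI HP [H|[_ H]] Hst; auto.
  assert (E : t = s) by (apply prefix_eq_len; auto; apply Nat.le_antisymm; apply prefix_length; auto).
  subst t. split; [apply (Tstar_stem qs s m); auto|].
  intros t0 H1 H2. assert (E : t0 = s) by (apply prefix_eq_len; auto; apply Nat.le_antisymm; apply prefix_length; auto).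
  subst t0. apply (good_stem Xi start qs s m); auto.
Qed.

Lemma limtree_succ Xi start qs s m t x : FAM Xi -> interval_partition start -> Pseq qs s m ->
  limtree Xi start qs s t -> prefix s t -> (x < MT (length t))%nat ->
  good Xi start qs (length s) (t ++ [x]) -> limtree Xi start qs s (t ++ [x]).
Proof.
  intros HF HI HP Ht Hst Hx Hg.
  destruct (limtree_right Xi start qs s m t HF HI HP Ht Hst) as [HT Hgs].
  right. split; [apply (prefix_trans _ t); auto; apply prefix_app|].
  split; [apply Tstar_snoc; auto|].
  intros t0 H1 H2. apply prefix_snoc in H2. destruct H2 as [H2|H2]; [apply Hgs; auto|subst; auto].
Qed.

Lemma limtree_miss Xi start qs s m t : FAM Xi -> interval_partition start -> Pseq qs s m ->
  limtree Xi start qs s t -> prefix s t ->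
  INR (MT (length t) - nsucc (limtree Xi start qs s) t) <= Rpower (INR (aT (length t))) (1 - 1 / INR (length s)).
Proof.
  intros HF HI HP Ht Hst.
  destruct (limtree_right Xi start qs s m t HF HI HP Ht Hst) as [HT Hgs].
  assert (Hle : (countP (fun x => good Xi start qs (length s) (t ++ [x])) 0 (MT (length t)) <= nsucc (limtree Xi start qs s) t)%nat).
  { apply countP_mono. intros x Hx Hg. apply (limtree_succ Xi start qs s m); auto. lia. }
  eapply Rle_trans; [|apply (lim_norm Xi start qs (length s) m t); auto].
  - apply le_INR. lia.
  - intro l. apply HP.
  - apply prefix_length; auto.
  - apply Hgs; auto. apply prefix_refl.
Qed.

Lemma nth_snoc_prefix t x s : prefix (t ++ [x]) s -> nth (length t) s 0%nat = x.
Proof.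
  intros [r Hr]. subst. rewrite <- app_assoc. rewrite app_nth2 by lia. rewrite Nat.sub_diag. reflexivity.
Qed.

Lemma limtree_inE Xi start qs s m : FAM Xi -> interval_partition start -> Pseq qs s m ->
  inE (limtree Xi start qs s).
Proof.
  intros HF HI HP.
  destruct (HP 0%nat) as [_ [Hm [Hs _]]].
  assert (Hs1 : (1 <= length s)%nat) by lia.
  assert (Hnorm := limtree_miss Xi start qs s m).
  split; [split; [|split]|].
  - left. apply prefix_nil.
  - intros t [Ht|[_ [Ht _]]]; auto. apply (Tstar_prefix t s); auto. apply (Tstar_stem qs s m); auto.
  - intros a b [Hab|[Hsab [HT Hg]]].
    + left. apply (prefix_trans _ (a ++ b)); auto. apply prefix_app.
    + destruct (prefix_comparable a s (a ++ b) (prefix_app a b) Hsab) as [H|H]; [left; auto|].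
      right. split; auto. split; [apply (Tstar_prefix a (a ++ b)); auto; apply prefix_app|].
      intros t0 H1 H2. apply Hg; auto. apply (prefix_trans _ a); auto. apply prefix_app.
  - exists s. split; [split; [|split]|split; auto].
    + left. apply prefix_refl.
    + assert (Hms := Hnorm s HF HI HP (or_introl (prefix_refl s)) (prefix_refl s)).
      pose proof (miss_small _ _ _ (inv_pos_le1 _ Hs1) Hms).
      apply countP_two in H. destruct H as [a [b [Hab [Ha Hb]]]]. exists a, b. auto.
    + intros t Ht [a [b [Hab [Ha Hb]]]].
      destruct (le_lt_dec (length s) (length t)) as [Hl|Hl]; auto. exfalso.
      assert (Hsucc : forall x, limtree Xi start qs s (t ++ [x]) -> nth (length t) s 0%nat = x).
      { intros x [Hx|[Hx _]]; [apply nth_snoc_prefix; auto|].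
        pose proof (prefix_length _ _ Hx). rewrite length_app in H. simpl in H.
        assert (s = t ++ [x]) by (apply prefix_eq_len; auto; rewrite length_app; simpl; lia).
        rewrite H0. rewrite app_nth2 by lia. rewrite Nat.sub_diag. reflexivity. }
      apply Hab. rewrite <- (Hsucc a Ha), <- (Hsucc b Hb). auto.
    + intros t Ht Hst. apply miss_to_mu. apply Hnorm; auto.
Qed.

Lemma pow2_ge (n : nat) : INR n + 1 <= 2 ^ n.
Proof. induction n. simpl; lra. rewrite S_INR. simpl pow. pose proof (pos_INR n). lra. Qed.

Lemma aR_ge_pow2 (h : nat) : 2 ^ (h + 2) <= INR (aT h).
Proof.
  pose proof (aT_ge_pow2 h). apply le_INR in H. rewrite pow_INR in H. simpl in H. auto.
Qed.

Lemma exists_pow2 (c : R) : exists n : nat, c <= 2 ^ n.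
Proof.
  destruct (Rle_or_lt c 0).
  - exists 0%nat. simpl. lra.
  - destruct (floor_exists c) as [n Hn]; [lra|]. exists (S n).
    pose proof (pow2_ge (S n)). rewrite S_INR in H0. lra.
Qed.

Lemma big_bound (h H K N : nat) : (1 <= K)%nat -> (2 * K * (N + 1) <= H)%nat -> (H <= h)%nat ->
  (INR N + 1) * Rpower (INR (aT h)) (1 - 1 / INR K) <= Rpower (INR (aT h)) (1 - 1 / INR H).
Proof.
  intros HK HH Hh.
  assert (HKr : 1 <= INR K) by (apply (le_INR 1); lia).
  assert (HHr : 2 * INR K * (INR N + 1) <= INR H).
  { apply le_INR in HH. rewrite !mult_INR, plus_INR in HH. simpl in HH. lra. }
  assert (HN0 : 0 <= INR N) by apply pos_INR.
  assert (HhH : INR H <= INR h) by (apply le_INR; auto).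
  pose proof (aR_ge4 h) as Ha.
  replace (1 - 1 / INR H) with ((1 - 1 / INR K) + (1 / INR K - 1 / INR H)) by ring.
  rewrite Rpower_plus, (Rmult_comm (Rpower _ (1 - 1 / INR K))).
  apply Rmult_le_compat_r; [left; apply Rpower_pos|].
  assert (Hexp : 1 / (2 * INR K) <= 1 / INR K - 1 / INR H).
  { assert (E : 1 / INR K - 1 / INR H - 1 / (2 * INR K) = (INR H - 2 * INR K) / (2 * INR K * INR H)) by (field; nra).
    assert (0 <= (INR H - 2 * INR K) / (2 * INR K * INR H)).
    { unfold Rdiv. apply Rmult_le_pos; [nra|]. left. apply Rinv_0_lt_compat. nra. }
    lra. }
  apply (Rle_trans _ (Rpower (INR (aT h)) (1 / (2 * INR K)))); [|apply Rle_Rpower; lra].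
  apply (Rle_trans _ (Rpower (2 ^ h) (1 / (2 * INR K)))).
  - rewrite <- Rpower_pow by lra. rewrite Rpower_mult.
    apply (Rle_trans _ (Rpower 2 (INR N + 1))).
    + replace (INR N + 1) with (INR (S N)) by (rewrite S_INR; auto). rewrite Rpower_pow by lra.
      pose proof (pow2_ge (S N)). rewrite S_INR in *. lra.
    + apply Rle_Rpower; [lra|].
      apply (Rmult_le_reg_r (2 * INR K)); [lra|].
      replace (INR h * (1 / (2 * INR K)) * (2 * INR K)) with (INR h) by (field; lra). nra.
  - apply Rle_Rpower_l.
    + unfold Rdiv. rewrite Rmult_1_l. left. apply Rinv_0_lt_compat. lra.
    + split; [apply pow_lt; lra|].
      pose proof (aR_ge_pow2 h). assert (2 ^ h <= 2 ^ (h + 2)) by (apply Rle_pow; [lra|lia]). lra.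
Qed.

Lemma stem_from_path (p : Tree) (s : list nat) :
  p s -> (forall t, p t -> prefix t s \/ prefix s t) -> splitting p s -> is_stem p s.
Proof.
  intros Hs Hcomp Hspl. split; auto. split; auto.
  intros t Ht [a [b [Hab [Ha Hb]]]].
  destruct (le_lt_dec (length s) (length t)) as [Hl|Hl]; auto. exfalso.
  assert (Hsucc : forall x, p (t ++ [x]) -> nth (length t) s 0%nat = x).
  { intros x Hx. destruct (Hcomp _ Hx) as [H|H]; [apply nth_snoc_prefix; auto|].
    pose proof (prefix_length _ _ H). rewrite length_app in H0. simpl in H0.
    assert (s = t ++ [x]) by (apply prefix_eq_len; auto; rewrite length_app; simpl; lia).
    rewrite H1. rewrite app_nth2 by lia. rewrite Nat.sub_diag. reflexivity. }
  apply Hab. rewrite <- (Hsucc a Ha), <- (Hsucc b Hb). auto.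
Qed.

Lemma inv_nat_inj (m1 m2 : nat) : (1 <= m1)%nat -> (1 <= m2)%nat -> 1 / INR m1 = 1 / INR m2 -> m1 = m2.
Proof.
  intros H1 H2 E. apply INR_eq.
  assert (0 < INR m1) by (apply lt_0_INR; lia). assert (0 < INR m2) by (apply lt_0_INR; lia).
  unfold Rdiv in E. rewrite !Rmult_1_l in E. rewrite <- (Rinv_inv (INR m1)), <- (Rinv_inv (INR m2)), E. auto.
Qed.

Lemma nat_choice (J : nat) (T : Type) (d : T) (P : nat -> T -> Prop) :
  (forall j, (j < J)%nat -> exists x, P j x) -> exists f : nat -> T, forall j, (j < J)%nat -> P j (f j).
Proof.
  intro H.
  assert (H' : forall j, exists x, (j < J)%nat -> P j x).
  { intro j. destruct (le_lt_dec J j). exists d. intro; lia. destruct (H j l) as [x Hx]. exists x; auto. }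
  exists (fun j => proj1_sig (constructive_indefinite_description _ (H' j))).
  intros j Hj. exact (proj2_sig (constructive_indefinite_description _ (H' j)) Hj).
Qed.

Lemma Rpower_mono_exp (h : nat) (x y : R) : x <= y -> Rpower (INR (aT h)) x <= Rpower (INR (aT h)) y.
Proof. intro H. apply Rle_Rpower; auto. pose proof (aR_ge4 h). lra. Qed.

Lemma inv_le (a b : nat) : (1 <= a)%nat -> (a <= b)%nat -> 1 / INR b <= 1 / INR a.
Proof.
  intros H1 H2. assert (1 <= INR a) by (apply (le_INR 1); auto). assert (INR a <= INR b) by (apply le_INR; auto).
  unfold Rdiv. rewrite !Rmult_1_l. apply Rinv_le_contravar; lra.
Qed.

Lemma inter_cond (q : Econd) stq xH (J Lm : nat) (F : nat -> nat -> Econd) (ms : nat -> nat) (hs K : nat) :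
  (1 <= length stq)%nat ->
  (forall t, proj1_sig q t -> prefix stq t ->
     INR (MT (length t) - nsucc (proj1_sig q) t) <= Rpower (INR (aT (length t))) (1 - 1 / INR (length stq))) ->
  proj1_sig q xH -> prefix stq xH ->
  (forall j l, (j < J)%nat -> loss_ok (proj1_sig (F j l)) hs (ms j)) ->
  (hs <= length xH)%nat -> (length stq <= K)%nat -> (forall j, (j < J)%nat -> (ms j <= K)%nat) ->
  (2 * K * (J * Lm + 1) <= length xH)%nat ->
  exists q' : Econd, Ele q' q /\
    forall j l, (j < J)%nat -> (l < Lm)%nat -> proj1_sig (F j l) xH -> Ele q' (F j l).
Proof.
  intros Hstq Hqn HxH Hpre Hloss Hhs HK1 HK2 HH.
  set (Q := fun s => proj1_sig q s /\ forall j l, (j < J)%nat -> (l < Lm)%nat -> proj1_sig (F j l) xH -> proj1_sig (F j l) s).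
  set (T := fun s => Q s /\ (prefix s xH \/ prefix xH s)).
  assert (HK : (1 <= K)%nat) by lia.
  assert (Hmiss : forall s, T s -> prefix xH s ->
     INR (MT (length s) - nsucc T s) <= Rpower (INR (aT (length s))) (1 - 1 / INR (length xH))).
  { intros s [[Hqs HFs] _] Hxs.
    set (RK := Rpower (INR (aT (length s))) (1 - 1 / INR K)).
    rewrite miss_eq.
    set (f := fun x => indR (~ proj1_sig q (s ++ [x])) +
          sumRf (fun j => sumRf (fun l => indR (proj1_sig (F j l) xH) * indR (~ proj1_sig (F j l) (s ++ [x]))) 0 Lm) 0 J).
    assert (Hpt : forall x, indR (~ T (s ++ [x])) <= f x).
    { intro x. unfold f.
      assert (Hnn : 0 <= sumRf (fun j => sumRf (fun l => indR (proj1_sig (F j l) xH) * indR (~ proj1_sig (F j l) (s ++ [x]))) 0 Lm) 0 J).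
      { apply sumRf_nonneg. intros. apply sumRf_nonneg. intros.
        pose proof (indR_01 (proj1_sig (F i i0) xH)). pose proof (indR_01 (~ proj1_sig (F i i0) (s ++ [x]))). nra. }
      destruct (excluded_middle_informative (T (s ++ [x]))) as [HT|HT].
      - rewrite (indR_0 (~ T (s ++ [x])) (fun H => H HT)). pose proof (indR_01 (~ proj1_sig q (s ++ [x]))). lra.
      - rewrite (indR_1 (~ T (s ++ [x])) HT).
        destruct (excluded_middle_informative (proj1_sig q (s ++ [x]))) as [Hq|Hq].
        + assert (exists j l, (j < J)%nat /\ (l < Lm)%nat /\ proj1_sig (F j l) xH /\ ~ proj1_sig (F j l) (s ++ [x])) as [j [l [Hj [Hl [H1 H2]]]]].
          { apply NNPP. intro Hn. apply HT. split; [split; auto|].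
            - intros j l Hj Hl H1. apply NNPP. intro H2. apply Hn. exists j, l. auto.
            - right. apply (prefix_trans _ s); auto. apply prefix_app. }
          assert (1 <= sumRf (fun j => sumRf (fun l => indR (proj1_sig (F j l) xH) * indR (~ proj1_sig (F j l) (s ++ [x]))) 0 Lm) 0 J).
          { eapply Rle_trans; [|apply (sumRf_ge_term _ 0 J j)].
            - eapply Rle_trans; [|apply (sumRf_ge_term _ 0 Lm l)].
              + cbv beta. rewrite (indR_1 (proj1_sig (F j l) xH) H1), (indR_1 (~ proj1_sig (F j l) (s ++ [x])) H2). lra.
              + intros. pose proof (indR_01 (proj1_sig (F j i) xH)). pose proof (indR_01 (~ proj1_sig (F j i) (s ++ [x]))). nra.
              + lia.
            - intros. apply sumRf_nonneg. intros.
              pose proof (indR_01 (proj1_sig (F i i0) xH)). pose proof (indR_01 (~ proj1_sig (F i i0) (s ++ [x]))). nra.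
            - lia. }
          pose proof (indR_01 (~ proj1_sig q (s ++ [x]))). lra.
        + rewrite (indR_1 (~ proj1_sig q (s ++ [x])) Hq). lra. }
    eapply Rle_trans; [apply (sumRf_le _ f 0 (MT (length s))); intros; apply Hpt|].
    unfold f. rewrite sumRf_plus. rewrite <- miss_eq.
    rewrite (sumRf_exchange (fun x j => sumRf (fun l => indR (proj1_sig (F j l) xH) * indR (~ proj1_sig (F j l) (s ++ [x]))) 0 Lm)).
    rewrite (sumRf_ext _ (fun j => sumRf (fun l => indR (proj1_sig (F j l) xH) * sumRf (fun x => indR (~ proj1_sig (F j l) (s ++ [x]))) 0 (MT (length s))) 0 Lm)).
    2:{ intros j _. rewrite (sumRf_exchange (fun x l => indR (proj1_sig (F j l) xH) * indR (~ proj1_sig (F j l) (s ++ [x])))).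
        apply sumRf_ext. intros l _. rewrite sumRf_scal. auto. }
    assert (Hq1 : INR (MT (length s) - nsucc (proj1_sig q) s) <= RK).
    { eapply Rle_trans; [apply Hqn; auto; apply (prefix_trans _ xH); auto|].
      apply Rpower_mono_exp. pose proof (inv_le (length stq) K Hstq HK1). lra. }
    assert (Hq2 : sumRf (fun j => sumRf (fun l => indR (proj1_sig (F j l) xH) * sumRf (fun x => indR (~ proj1_sig (F j l) (s ++ [x]))) 0 (MT (length s))) 0 Lm) 0 J
                  <= INR J * (INR Lm * RK)).
    { apply sumRf_bound. intros j Hj. apply sumRf_bound. intros l Hl.
      destruct (excluded_middle_informative (proj1_sig (F j l) xH)) as [Hx|Hx].
      - rewrite indR_1, Rmult_1_l by auto. rewrite <- miss_eq.
        destruct (Hloss j l ltac:(lia)) as [Hm [_ Hn]].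
        eapply Rle_trans; [apply mu_to_miss; apply Hn; [apply HFs; auto; lia|]|].
        + apply prefix_length in Hxs. lia.
        + apply Rpower_mono_exp. pose proof (inv_le (ms j) K ltac:(lia) (HK2 j ltac:(lia))). lra.
      - rewrite indR_0 by auto. rewrite Rmult_0_l. unfold RK. left. apply Rpower_pos. }
    assert (Hfin : (INR (J * Lm) + 1) * RK <= Rpower (INR (aT (length s))) (1 - 1 / INR (length xH))).
    { apply big_bound; auto. apply prefix_length; auto. }
    rewrite mult_INR in Hfin. lra. }
  assert (HxT : T xH).
  { split; [split; auto|left; apply prefix_refl]. }
  assert (HxH1 : (1 <= length xH)%nat) by nia.
  assert (HinE : inE T).
  { split; [split; [|split]|].
    - split; [split|left; apply prefix_nil].
      + apply (subtree_prefix _ _ xH); auto. apply econd_subtree. apply prefix_nil.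
      + intros j l Hj Hl Hf. apply (subtree_prefix _ _ xH); auto. apply econd_subtree. apply prefix_nil.
    - intros s [[Hs _] _]. pose proof (econd_subtree q) as [_ [H _]]. auto.
    - intros a b [[Hqa HFa] Hc]. split; [split|].
      + apply (subtree_prefix _ _ (a ++ b)); auto. apply econd_subtree. apply prefix_app.
      + intros j l Hj Hl Hf. apply (subtree_prefix _ _ (a ++ b)); auto. apply econd_subtree. apply prefix_app.
      + destruct Hc as [Hc|Hc].
        * left. apply (prefix_trans _ (a ++ b)); auto. apply prefix_app.
        * apply (prefix_comparable a xH (a ++ b)); auto. apply prefix_app.
    - exists xH. split; [apply stem_from_path; auto|split; auto].
      + intros t [_ Ht]; auto.
      + pose proof (miss_small _ _ _ (inv_pos_le1 _ HxH1) (Hmiss xH HxT (prefix_refl xH))).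
        apply countP_two in H. destruct H as [a [b [Hab [Ha Hb]]]]. exists a, b. auto.
      + intros t Ht Hxt. apply miss_to_mu. apply Hmiss; auto. }
  exists (exist _ T HinE). split.
  - intros s [[Hs _] _]. auto.
  - intros j l Hj Hl Hx s [[_ HF] _]. simpl. apply HF; auto.
Qed.

Definition Aj start (qs : nat -> nat -> Econd) (j : nat) (u : list nat) (x : list nat) : R :=
  1 / INR (length u) * sumR (map (fun k => gk start (qs j) k x) u).

Definition Wf start qs (J : nat) u x : R := sumRf (fun j => Aj start qs j u x) 0 J.

Lemma Aj_mono start qs j u x y : interval_partition start -> prefix x y -> u <> [] ->
  Aj start qs j u y <= Aj start qs j u x.
Proof.
  intros HI Hp Hu. unfold Aj. apply Rmult_le_compat_l.
  - destruct u; [congruence|]. simpl length. unfold Rdiv. rewrite Rmult_1_l. left. apply Rinv_0_lt_compat. apply lt_0_INR. lia.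
  - apply sumR_map_le. intros. apply gk_mono; auto.
Qed.

Lemma walk_step start qs (J : nat) u (ms : nat -> nat) hs (q : Econd) stq x :
  interval_partition start -> u <> [] ->
  (forall j l, (j < J)%nat -> loss_ok (proj1_sig (qs j l)) hs (ms j)) ->
  (forall t, proj1_sig q t -> prefix stq t ->
     INR (MT (length t) - nsucc (proj1_sig q) t) <= Rpower (INR (aT (length t))) (1 - 1 / INR (length stq))) ->
  (1 <= length stq)%nat ->
  proj1_sig q x -> prefix stq x -> (hs <= length x)%nat ->
  exists y, proj1_sig q y /\ prefix x y /\ length y = S (length x) /\
    Wf start qs J u x - Wf start qs J u y <= INR J / 2 ^ (length x).
Proof.
  intros HI Hu Hloss Hqn Hstq Hx Hstx Hhs.
  set (h := length x) in *. set (a := INR (aT h)). set (M := MT h).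
  assert (Ha : 4 <= a) by apply aR_ge4.
  assert (HuR : 0 < INR (length u)) by (destruct u; [congruence|]; simpl length; apply lt_0_INR; lia).
  set (D := fun l => Wf start qs J u x - Wf start qs J u (x ++ [l])).
  assert (HD0 : forall l, 0 <= D l).
  { intro l. unfold D, Wf. rewrite <- sumRf_minus. apply sumRf_nonneg. intros j _.
    pose proof (Aj_mono start qs j u x (x ++ [l]) HI (prefix_app x [l]) Hu). lra. }
  assert (HDsum : sumRf D 0 M <= INR J * a).
  { unfold D, Wf.
    rewrite (sumRf_ext _ (fun l => sumRf (fun j => Aj start qs j u x - Aj start qs j u (x ++ [l])) 0 J))
      by (intros; rewrite sumRf_minus; auto).
    rewrite (sumRf_exchange (fun l j => Aj start qs j u x - Aj start qs j u (x ++ [l]))).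
    apply sumRf_bound. intros j Hj.
    rewrite (sumRf_ext _ (fun l => 1 / INR (length u) * sumR (map (fun k => gk start (qs j) k x - gk start (qs j) k (x ++ [l])) u)))
      by (intros; unfold Aj; rewrite sumR_map_minus; ring).
    rewrite sumRf_scal. rewrite <- (sumR_sumRf_exchange (fun k l => gk start (qs j) k x - gk start (qs j) k (x ++ [l]))).
    assert (sumR (map (fun k => sumRf (fun l => gk start (qs j) k x - gk start (qs j) k (x ++ [l])) 0 M) u) <= sumR (map (fun _ => a) u)).
    { apply sumR_map_le. intros k _.
      destruct (Hloss j 0%nat ltac:(lia)) as [Hm _].
      eapply Rle_trans; [apply (gk_drop_sum start (qs j) k x hs (ms j)); auto; intro l; apply Hloss; lia|].
      apply Rpower_le_a. apply inv_pos_le1. lia. }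
    rewrite sumR_map_const in H.
    apply (Rmult_le_compat_l (1 / INR (length u))) in H; [|unfold Rdiv; rewrite Rmult_1_l; left; apply Rinv_0_lt_compat; auto].
    replace (1 / INR (length u) * (INR (length u) * a)) with a in H by (field; lra). auto. }
  assert (Hmiss := Hqn x Hx Hstx). fold h a M in Hmiss.
  assert (Hmiss' : INR (M - nsucc (proj1_sig q) x) <= a) by (eapply Rle_trans; [apply Hmiss|apply Rpower_le_a; apply inv_pos_le1; auto]).
  assert (Hns : a * a - a <= INR (nsucc (proj1_sig q) x)).
  { pose proof (nsucc_le (proj1_sig q) x). fold h M in H. rewrite minus_INR in Hmiss' by auto.
    unfold M in Hmiss'. rewrite MR_eq in Hmiss'. fold a in Hmiss'. lra. }
  assert (Hex : exists l, (l < M)%nat /\ proj1_sig q (x ++ [l]) /\ D l <= 4 * INR J / a).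
  { destruct J as [|J'].
    - destruct (succ_exists (proj1_sig q) x (1 / INR (length stq))) as [l [Hl1 Hl2]].
      + apply inv_pos_le1; auto.
      + auto.
      + exists l. split; auto. split; auto. unfold D, Wf. simpl. lra.
    - apply NNPP. intro Hn.
      assert (Hc : INR (nsucc (proj1_sig q) x) * (4 * INR (S J') / a) <= sumRf D 0 M).
      { apply count_markov; auto. intros l Hl Hql. destruct (Rle_or_lt (D l) (4 * INR (S J') / a)); [|lra].
        exfalso. apply Hn. exists l. split; [lia|]. auto. }
      assert (HJ : 1 <= INR (S J')) by (rewrite S_INR; pose proof (pos_INR J'); lra).
      assert ((a * a - a) * (4 * INR (S J') / a) <= INR (nsucc (proj1_sig q) x) * (4 * INR (S J') / a)).
      { apply Rmult_le_compat_r; auto. unfold Rdiv. apply Rmult_le_pos; [lra|]. left; apply Rinv_0_lt_compat; lra. }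
      replace ((a * a - a) * (4 * INR (S J') / a)) with (4 * INR (S J') * (a - 1)) in H by (field; lra).
      nra. }
  destruct Hex as [l [Hl1 [Hl2 Hl3]]].
  exists (x ++ [l]). split; auto. split; [apply prefix_app|]. split; [rewrite length_app; simpl; lia|].
  fold (D l). eapply Rle_trans; [apply Hl3|].
  pose proof (aR_ge_pow2 h). fold a in H.
  assert (0 < 2 ^ h) by (apply pow_lt; lra).
  replace (2 ^ (h + 2)) with (4 * 2 ^ h) in H by (rewrite pow_add; simpl; ring).
  replace (4 * INR J / a) with (INR J * (4 / a)) by (field; lra).
  replace (INR J / 2 ^ h) with (INR J * (4 / (4 * 2 ^ h))) by (field; lra).
  apply Rmult_le_compat_l; [apply pos_INR|].
  unfold Rdiv. apply Rmult_le_compat_l; [lra|]. apply Rinv_le_contravar; lra.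
Qed.

Lemma walk start qs (J : nat) u (ms : nat -> nat) hs (q : Econd) stq x0 :
  interval_partition start -> u <> [] ->
  (forall j l, (j < J)%nat -> loss_ok (proj1_sig (qs j l)) hs (ms j)) ->
  (forall t, proj1_sig q t -> prefix stq t ->
     INR (MT (length t) - nsucc (proj1_sig q) t) <= Rpower (INR (aT (length t))) (1 - 1 / INR (length stq))) ->
  (1 <= length stq)%nat ->
  proj1_sig q x0 -> prefix stq x0 -> (hs <= length x0)%nat ->
  forall n, exists y, proj1_sig q y /\ prefix x0 y /\ length y = (length x0 + n)%nat /\
    Wf start qs J u x0 - Wf start qs J u y <= 2 * INR J * (1 / 2 ^ (length x0) - 1 / 2 ^ (length y)).
Proof.
  intros HI Hu Hloss Hqn Hstq Hx0 Hst0 Hhs n. induction n.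
  - exists x0. split; auto. split; [apply prefix_refl|]. split; [lia|]. lra.
  - destruct IHn as [y [Hy1 [Hy2 [Hy3 Hy4]]]].
    destruct (walk_step start qs J u ms hs q stq y HI Hu Hloss Hqn Hstq Hy1) as [z [Hz1 [Hz2 [Hz3 Hz4]]]].
    + apply (prefix_trans _ x0); auto.
    + apply prefix_length in Hy2. lia.
    + exists z. split; auto. split; [apply (prefix_trans _ y); auto|]. split; [lia|].
      rewrite Hz3. simpl pow.
      assert (0 < 2 ^ length y) by (apply pow_lt; lra).
      assert (INR J / 2 ^ length y = 2 * INR J * (1 / 2 ^ length y - 1 / (2 * 2 ^ length y))) by (field; lra).
      lra.
Qed.

Definition limF Xi start (qs : nat -> Econd) : Econd :=
  match excluded_middle_informative
          (exists s, (exists m, Pseq qs s m) /\ inE (limtree Xi start qs s)) with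
  | left H =>
      exist _ (limtree Xi start qs (proj1_sig (constructive_indefinite_description _ H)))
              (proj2 (proj2_sig (constructive_indefinite_description _ H)))
  | right _ => qs 0%nat
  end.

Lemma limF_spec Xi start qs :
  (exists s, (exists m, Pseq qs s m) /\ inE (limtree Xi start qs s)) ->
  exists s m, Pseq qs s m /\ proj1_sig (limF Xi start qs) = limtree Xi start qs s.
Proof.
  intro H. unfold limF. destruct (excluded_middle_informative _) as [H'|H']; [|contradiction].
  simpl. destruct (constructive_indefinite_description _ H') as [s [[m Hm] Hin]]. simpl.
  exists s, m. auto.
Qed.

Lemma loss_data (q : Econd) s l : stem_is q s -> loss_is q l ->
  exists m, loss_ok (proj1_sig q) (length s) m /\ l = 1 / INR m.
Proof.
  intros Hs [st [Hst [m [Hm [_ Hl]]]]].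
  rewrite (stem_len_unique (proj1_sig q) s st); auto. exists m. auto.
Qed.

Lemma start_mono start : interval_partition start -> forall a b, (a <= b)%nat -> (start a <= start b)%nat.
Proof.
  intros [_ [H _]] a b Hab. induction Hab; auto. specialize (H m). lia.
Qed.

Lemma le_fold_max (u : list nat) k : In k u -> (k <= fold_right max 0%nat u)%nat.
Proof. induction u; simpl; intros; [contradiction|]. destruct H; subst; lia || (apply IHu in H; lia). Qed.

Theorem lemma1 :
  forall (start : nat -> nat), interval_partition start ->
  forall Xi : (nat -> bool) -> R, FAM Xi ->
  exists lim : (nat -> Econd) -> Econd, strong_FAM_limit start Xi lim.
Proof.
  intros start HI Xi HF. exists (limF Xi start).
  intros sstar lstar jstar qs Hqs eps kstar B mstar Heps HB q Hq.
  set (hs := length sstar).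
  assert (Hdata : forall j, (j < jstar)%nat -> exists sm : list nat * nat,
     Pseq (qs j) (fst sm) (snd sm) /\ proj1_sig (limF Xi start (qs j)) = limtree Xi start (qs j) (fst sm)
     /\ length (fst sm) = hs).
  { intros j Hj.
    destruct (Hqs j 0%nat Hj) as [Hs0 Hl0].
    destruct (loss_data _ _ _ Hs0 Hl0) as [m0 [Hm0 Hlm0]].
    assert (HP : Pseq (qs j) sstar m0).
    { intro l. destruct (Hqs j l Hj) as [Hsl Hll]. split; auto.
      destruct (loss_data _ _ _ Hsl Hll) as [ml [Hml Hlml]].
      assert (ml = m0) by (apply inv_nat_inj; [destruct Hml; lia|destruct Hm0; lia|congruence]).
      subst; auto. }
    destruct (limF_spec Xi start (qs j)) as [s' [m' [HP' HE]]].
    { exists sstar. split; [exists m0; auto|]. apply (limtree_inE Xi start (qs j) sstar m0); auto. }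
    exists (s', m'). simpl. split; auto. split; auto.
    destruct (HP' 0%nat) as [H1 _]. destruct (HP 0%nat) as [H2 _].
    apply (stem_len_unique (proj1_sig (qs j 0%nat))); auto. }
  destruct (nat_choice jstar _ ([], 0%nat) _ Hdata) as [sm Hsm].
  set (ms := fun j => snd (sm j)).
  assert (Hloss : forall j l, (j < jstar)%nat -> loss_ok (proj1_sig (qs j l)) hs (ms j)).
  { intros j l Hj. destruct (Hsm j Hj) as [HP [_ Hlen]]. destruct (HP l) as [_ H].
    rewrite Hlen in H. auto. }
  destruct (econd_data q) as [stq [Hstq [Hstq1 Hqn]]].
  destruct (exists_pow2 (4 * INR jstar / eps)) as [he Hhe].
  destruct (econd_climb q stq Hstq Hstq1 Hqn (hs + he)) as [t [Ht [Hstt Hlt]]].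
  assert (Hths : (hs <= length t)%nat) by lia.
  assert (Hgood : forall j, (j < jstar)%nat -> good Xi start (qs j) hs t).
  { intros j Hj. destruct (Hsm j Hj) as [HP [HE Hlen]].
    pose proof (Hq j Hj t Ht) as Htl. rewrite HE in Htl.
    assert (Hpre : prefix (fst (sm j)) t).
    { destruct Htl as [H|[H _]]; auto.
      assert (E : t = fst (sm j)) by (apply prefix_eq_len; auto; apply Nat.le_antisymm; [apply prefix_length; auto|lia]).
      rewrite E. apply prefix_refl. }
    destruct (limtree_right Xi start (qs j) (fst (sm j)) (snd (sm j)) t HF HI HP Htl Hpre) as [_ Hg].
    rewrite <- Hlen. apply Hg; auto. apply prefix_refl. }
  set (G := fun j => Gset start (qs j) hs t).
  destruct (approx Xi HF (map B (seq 0 mstar) ++ map G (seq 0 jstar)) (eps / 2) kstar) as [u [Hu1 [Hu2 [Hu3 Hu4]]]].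
  { lra. }
  set (K := (length stq + hs)%nat).
  set (Lmax := start (S (fold_right max 0%nat u))).
  set (N := (jstar * Lmax)%nat).
  destruct (walk start qs jstar u ms hs q stq t HI Hu1 Hloss Hqn Hstq1 Ht Hstt Hths (2 * K * (N + 1)))
    as [xH [HxH1 [HxH2 [HxH3 HxH4]]]].
  destruct (inter_cond q stq xH jstar Lmax qs ms hs K Hstq1 Hqn HxH1) as [q' [Hq'1 Hq'2]].
  - apply (prefix_trans _ t); auto.
  - auto.
  - apply prefix_length in HxH2. lia.
  - unfold K; lia.
  - intros j Hj. destruct (Hloss j 0%nat Hj) as [_ [H _]]. unfold K. lia.
  - unfold N. lia.
  - exists u, q'. split; auto. split; auto. split; auto. split; auto. split.
    + intros m Hm. destruct (Hu4 (B m)) as [H1 H2].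
      { apply in_or_app. left. apply in_map. apply in_seq. lia. }
      split; lra.
    + intros j Hj.
      destruct (Hqs j 0%nat Hj) as [Hs0 Hl0].
      destruct (loss_data _ _ _ Hs0 Hl0) as [m0 [[Hm0a [Hm0b _]] Hlm0]]. fold hs in Hm0b.
      set (eta0 := eta hs (length t)).
      assert (Heta : 0 <= eta0 <= 1 / (2 * (INR hs - 1))) by (apply eta_bounds; lia).
      assert (Hhsr : 3 * INR m0 + 1 <= INR hs).
      { apply le_INR in Hm0b. rewrite S_INR, mult_INR in Hm0b. simpl in Hm0b. lra. }
      assert (Hm0r : 2 <= INR m0) by (apply (le_INR 2); lia).
      assert (Heta2 : 2 * eta0 <= lstar).
      { rewrite Hlm0.
        assert (1 / (2 * (INR hs - 1)) <= 1 / (2 * (3 * INR m0))).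
        { unfold Rdiv. rewrite !Rmult_1_l. apply Rinv_le_contravar; lra. }
        assert (2 * (1 / (2 * (3 * INR m0))) <= 1 / INR m0).
        { replace (2 * (1 / (2 * (3 * INR m0)))) with (1 / (3 * INR m0)) by (field; lra).
          unfold Rdiv. rewrite !Rmult_1_l. apply Rinv_le_contravar; lra. }
        lra. }
      assert (HuR : 0 < INR (length u)) by (destruct u; [congruence|]; simpl length; apply lt_0_INR; lia).
      assert (Hs1 : Aj start qs j u xH <= 1 / INR (length u) *
         sumR (map (fun k => INR (countP (fun l => Ele q' (qs j l)) (start k) (Ilen start k)) / INR (Ilen start k)) u)).
      { unfold Aj. apply Rmult_le_compat_l; [unfold Rdiv; rewrite Rmult_1_l; left; apply Rinv_0_lt_compat; auto|].
        apply sumR_map_le. intros k Hk. unfold gk.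
        unfold Rdiv. apply Rmult_le_compat_r; [left; apply Rinv_0_lt_compat; apply IlenR_pos; auto|].
        apply le_INR. apply countP_mono. intros l Hl Hlx. apply Hq'2; auto.
        assert (E1 : (start k + Ilen start k = start (S k))%nat).
        { unfold Ilen. destruct HI as [_ [Hinc _]]. specialize (Hinc k). lia. }
        assert (E2 : (start (S k) <= Lmax)%nat).
        { unfold Lmax. apply start_mono; auto. apply le_n_S. apply le_fold_max; auto. }
        lia. }
      assert (Hs2 : Aj start qs j u t - Aj start qs j u xH <= Wf start qs jstar u t - Wf start qs jstar u xH).
      { unfold Wf. rewrite <- sumRf_minus.
        apply (sumRf_ge_term (fun i => Aj start qs i u t - Aj start qs i u xH) 0 jstar j).
        - intros i _. pose proof (Aj_mono start qs i u t xH HI HxH2 Hu1). lra.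
        - lia. }
      assert (Hs3 : Wf start qs jstar u t - Wf start qs jstar u xH <= eps / 2).
      { eapply Rle_trans; [apply HxH4|].
        assert (Hp : 0 < 2 ^ length xH) by (apply pow_lt; lra).
        assert (Hpt : 2 ^ he <= 2 ^ length t) by (apply Rle_pow; [lra|lia]).
        assert (Hpt0 : 0 < 2 ^ he) by (apply pow_lt; lra).
        assert (0 <= 1 / 2 ^ length xH) by (unfold Rdiv; rewrite Rmult_1_l; left; apply Rinv_0_lt_compat; auto).
        assert (2 * INR jstar * (1 / 2 ^ length t) <= eps / 2).
        { assert (HJ := pos_INR jstar).
          assert (4 * INR jstar <= eps * 2 ^ length t).
          { apply (Rmult_le_compat_r eps) in Hhe; [|lra].
            replace (4 * INR jstar / eps * eps) with (4 * INR jstar) in Hhe by (field; lra). nra. }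
          apply (Rmult_le_reg_r (2 ^ length t)); [lra|].
          replace (2 * INR jstar * (1 / 2 ^ length t) * 2 ^ length t) with (2 * INR jstar) by (field; lra). lra. }
        pose proof (pos_INR jstar). nra. }
      assert (H7 : 7 <= INR hs).
      { assert (INR 7 <= INR hs) by (apply le_INR; lia). replace (INR 7) with 7 in H by (simpl; ring). auto. }
      assert (Heta1 : eta0 <= 1).
      { assert (1 / (2 * (INR hs - 1)) <= 1).
        { unfold Rdiv. rewrite Rmult_1_l. rewrite <- Rinv_1. apply Rinv_le_contravar; lra. }
        lra. }
      assert (Hs4 : (1 - eta0) * (INR (length (filter (G j) u)) / INR (length u)) <= Aj start qs j u t).
      { unfold Aj.
        assert (INR (length (filter (G j) u)) * (1 - eta0) <= sumR (map (fun k => gk start (qs j) k t) u)).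
        { apply sumR_filter_bound.
          - lra.
          - intros k _. apply gk_range; auto.
          - intros k _ Hk. unfold G, Gset in Hk. apply pdec_true_inv in Hk. auto. }
        unfold Rdiv. rewrite Rmult_1_l.
        replace ((1 - eta0) * (INR (length (filter (G j) u)) * / INR (length u)))
          with (/ INR (length u) * (INR (length (filter (G j) u)) * (1 - eta0))) by ring.
        apply Rmult_le_compat_l; [left; apply Rinv_0_lt_compat; auto|]. auto. }
      destruct (Hu4 (G j)) as [Hg1 _].
      { apply in_or_app. right. apply in_map. apply in_seq. lia. }
      assert (Hg : 1 - eta0 <= Xi (G j)) by (apply Hgood; auto).
      assert (H5 : (1 - eta0) * (1 - eta0 - eps / 2) <= (1 - eta0) * (INR (length (filter (G j) u)) / INR (length u))).
      { apply Rmult_le_compat_l; lra. }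
      apply Rle_ge. nra.
Qed.
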